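(* For $0<c<1$ and curves $\gamma(r)$, $\tilde\gamma(s)$ in $\mathbb{H}^2$ parametrized by arc length with unit normal fields $N(r)$, $\tilde N(s)$ and curvatures $\kappa(r)$, $\tilde\kappa(s)$ (so $\gamma''=\gamma+\kappa N$, $N'=-\kappa\gamma'$, and similarly for $\tilde\gamma$), let $M^c_{\kappa,\tilde\kappa}$ be the hypersurface of $\mathbb{H}^2\times\mathbb{H}^2$ given by the immersion $(t,r,s)\mapsto\big(\cosh(\sqrt c\,t)\gamma(r)+\sinh(\sqrt c\,t)N(r),\ \cosh(\sqrt{1-c}\,t)\tilde\gamma(s)+\sinh(\sqrt{1-c}\,t)\tilde N(s)\big)$, and let $M$ be an open part of $M^c_{\kappa,\tilde\kappa}$. Then: (1) $M$ is minimal if and only if $c=\tfrac12$ and $\kappa(r)$ and $\tilde\kappa(s)$ are equal to the same constant; (2) $M$ has constant sectional curvature if and only if $c=\tfrac12$ and $\kappa$, $\tilde\kappa$ are constants satisfying $\kappa\tilde\kappa=1$; moreover, in that case the sectional curvature of $M$ equals $-\tfrac12$.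
   Context: $\mathbb{R}^3_1$ denotes $\mathbb{R}^3$ with the Lorentzian inner product $\langle x,y\rangle=-x_1y_1+x_2y_2+x_3y_3$, $\mathbb{H}^2=\{x\in\mathbb{R}^3_1:\langle x,x\rangle=-1,\ x_1>0\}$, and $\mathbb{H}^2\times\mathbb{H}^2\subset\mathbb{R}^3_1\times\mathbb{R}^3_1$ carries the Riemannian product metric; $M$ carries the induced metric. *)

(* Defs.v *)
From Stdlib Require Import Reals.
From Coquelicot Require Import Coquelicot.
Open Scope R_scope.

Definition V3 := (R * R * R)%type.
Definition V6 := (V3 * V3)%type.

Definition x1 (x : V3) : R := fst (fst x).
Definition x2 (x : V3) : R := snd (fst x).
Definition x3 (x : V3) : R := snd x.

Definition lor (x y : V3) : R := - x1 x * x1 y + x2 x * x2 y + x3 x * x3 y.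

(* Product metric on R^3_1 x R^3_1 (restricts to the Riemannian product
   metric of H^2 x H^2) *)
Definition ip6 (p q : V6) : R := lor (fst p) (fst q) + lor (snd p) (snd q).

Definition vadd (x y : V3) : V3 := (x1 x + x1 y, x2 x + x2 y, x3 x + x3 y).
Definition vscal (a : R) (x : V3) : V3 := (a * x1 x, a * x2 x, a * x3 x).

Definition in_H2 (x : V3) : Prop := lor x x = -1 /\ 0 < x1 x.

Definition dV (f : R -> V3) (r : R) : V3 :=
  (Derive (fun u => x1 (f u)) r, Derive (fun u => x2 (f u)) r,
   Derive (fun u => x3 (f u)) r).

Definition smooth_on (I : R -> Prop) (f : R -> R) : Prop :=
  forall r, I r -> forall n, ex_derive_n f n r.

Definition smoothV_on (I : R -> Prop) (f : R -> V3) : Prop :=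
  smooth_on I (fun u => x1 (f u)) /\ smooth_on I (fun u => x2 (f u)) /\
  smooth_on I (fun u => x3 (f u)).

Definition frenet_curve (I : R -> Prop) (gam N : R -> V3) (k : R -> R) : Prop :=
  open I /\ smoothV_on I gam /\ smoothV_on I N /\ smooth_on I k /\
  forall r, I r ->
    in_H2 (gam r) /\
    lor (dV gam r) (dV gam r) = 1 /\
    lor (N r) (N r) = 1 /\ lor (N r) (gam r) = 0 /\ lor (N r) (dV gam r) = 0 /\
    dV (dV gam) r = vadd (gam r) (vscal (k r) (N r)) /\
    dV N r = vscal (- k r) (dV gam r).

Definition coord (x : V3) (i : nat) : R :=
  match i with O => x1 x | 1%nat => x2 x | _ => x3 x end.

Definition upd (x : V3) (i : nat) (u : R) : V3 :=
  match i with
  | O => (u, x2 x, x3 x)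
  | 1%nat => (x1 x, u, x3 x)
  | _ => (x1 x, x2 x, u)
  end.

Definition connected3 (U : V3 -> Prop) : Prop :=
  forall A B : V3 -> Prop, open A -> open B ->
    (forall x, U x -> A x \/ B x) ->
    (forall x, U x -> A x -> B x -> False) ->
    (exists x, U x /\ A x) -> (exists x, U x /\ B x) -> False.

Definition Mc (c : R) (gam N gam2 N2 : R -> V3) (x : V3) : V6 :=
  let t := coord x 0 in let r := coord x 1 in let s := coord x 2 in
  (vadd (vscal (cosh (sqrt c * t)) (gam r)) (vscal (sinh (sqrt c * t)) (N r)),
   vadd (vscal (cosh (sqrt (1 - c) * t)) (gam2 s))
        (vscal (sinh (sqrt (1 - c) * t)) (N2 s))).

Definition dP (f : R -> V6) (u : R) : V6 :=
  (dV (fun v => fst (f v)) u, dV (fun v => snd (f v)) u).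

Definition pF (i : nat) (F : V3 -> V6) (x : V3) : V6 :=
  dP (fun u => F (upd x i u)) (coord x i).

Definition pd (i : nat) (f : V3 -> R) (x : V3) : R :=
  Derive (fun u => f (upd x i u)) (coord x i).

Definition sum3 (f : nat -> R) : R := f 0%nat + f 1%nat + f 2%nat.

Definition gm (F : V3 -> V6) (i j : nat) (x : V3) : R :=
  ip6 (pF i F x) (pF j F x).

Definition cof (F : V3 -> V6) (i j : nat) (x : V3) : R :=
  let i1 := ((i + 1) mod 3)%nat in let i2 := ((i + 2) mod 3)%nat in
  let j1 := ((j + 1) mod 3)%nat in let j2 := ((j + 2) mod 3)%nat in
  gm F i1 j1 x * gm F i2 j2 x - gm F i1 j2 x * gm F i2 j1 x.

Definition detg (F : V3 -> V6) (x : V3) : R :=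
  sum3 (fun j => gm F 0 j x * cof F 0 j x).

Definition ginv (F : V3 -> V6) (i j : nat) (x : V3) : R :=
  cof F j i x / detg F x.

(* xi is a unit normal of F at x: tangent to H^2 x H^2 at F x, unit,
   orthogonal to the tangent space of M *)
Definition unit_normal (F : V3 -> V6) (x : V3) (xi : V6) : Prop :=
  ip6 xi xi = 1 /\ lor (fst xi) (fst (F x)) = 0 /\ lor (snd xi) (snd (F x)) = 0 /\
  forall i, (i < 3)%nat -> ip6 xi (pF i F x) = 0.

(* second fundamental form h_ij w.r.t. xi (the Levi-Civita connection of
   H^2 x H^2 differs from the flat derivative of R^6 by a combination of
   (F1,0),(0,F2), which is orthogonal to xi) *)
Definition sff (F : V3 -> V6) (xi : V6) (i j : nat) (x : V3) : R :=
  ip6 (pF i (pF j F) x) xi.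

Definition mean_curv (F : V3 -> V6) (xi : V6) (x : V3) : R :=
  sum3 (fun i => sum3 (fun j => ginv F i j x * sff F xi i j x)).

Definition minimal_on (F : V3 -> V6) (U : V3 -> Prop) : Prop :=
  forall x, U x -> forall xi, unit_normal F x xi -> mean_curv F xi x = 0.

Definition Gam1 (F : V3 -> V6) (p k l : nat) (x : V3) : R :=
  / 2 * (pd k (gm F p l) x + pd l (gm F p k) x - pd p (gm F k l) x).

(* Riemann tensor R_{iklm} of the induced metric (Landau-Lifshitz convention,
   R_{1212} = K det g for a surface of Gauss curvature K) *)
Definition Riem (F : V3 -> V6) (i k l m : nat) (x : V3) : R :=
  / 2 * (pd k (pd l (gm F i m)) x + pd i (pd m (gm F k l)) x
         - pd k (pd m (gm F i l)) x - pd i (pd l (gm F k m)) x)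
  + sum3 (fun p => sum3 (fun q => ginv F p q x *
        (Gam1 F p k l x * Gam1 F q i m x - Gam1 F p k m x * Gam1 F q i l x))).

Definition gX (F : V3 -> V6) (x : V3) (X Y : nat -> R) : R :=
  sum3 (fun i => sum3 (fun j => gm F i j x * X i * Y j)).

Definition sec (F : V3 -> V6) (x : V3) (X Y : nat -> R) : R :=
  sum3 (fun i => sum3 (fun k => sum3 (fun l => sum3 (fun m =>
    Riem F i k l m x * X i * Y k * X l * Y m))))
  / (gX F x X X * gX F x Y Y - gX F x X Y ^ 2).

Definition has_sec_curv (F : V3 -> V6) (U : V3 -> Prop) (K0 : R) : Prop :=
  forall x, U x -> forall X Y : nat -> R,
    gX F x X X * gX F x Y Y - gX F x X Y ^ 2 <> 0 -> sec F x X Y = K0.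

Definition const_sec (F : V3 -> V6) (U : V3 -> Prop) : Prop :=
  exists K0, has_sec_curv F U K0.

(* Main.v *)
Require Import Defs.
From Stdlib Require Import Reals Lra Lia FunctionalExtensionality.
From Coquelicot Require Import Coquelicot.
Open Scope R_scope.

Lemma D_plus (f g : R -> R) x a b :
  is_derive f x a -> is_derive g x b -> is_derive (fun u => f u + g u) x (a + b).
Proof. intros Hf Hg. exact (is_derive_plus f g x a b Hf Hg). Qed.

Lemma D_opp (f : R -> R) x a :
  is_derive f x a -> is_derive (fun u => - f u) x (- a).
Proof. intros Hf. exact (is_derive_opp f x a Hf). Qed.

Lemma D_minus (f g : R -> R) x a b :
  is_derive f x a -> is_derive g x b -> is_derive (fun u => f u - g u) x (a - b).
Proof. intros Hf Hg. exact (is_derive_minus f g x a b Hf Hg). Qed.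

Lemma D_mult (f g : R -> R) x a b :
  is_derive f x a -> is_derive g x b ->
  is_derive (fun u => f u * g u) x (a * g x + f x * b).
Proof.
  intros Hf Hg. exact (is_derive_mult f g x a b Hf Hg Rmult_comm).
Qed.

Lemma D_scal (f : R -> R) x k a :
  is_derive f x a -> is_derive (fun u => k * f u) x (k * a).
Proof. intros Hf. exact (is_derive_scal f x k a Hf). Qed.

Lemma D_const (k x : R) : is_derive (fun _ => k) x 0.
Proof. exact (is_derive_const k x). Qed.

Lemma D_lin (a t : R) : is_derive (fun u => a * u) t a.
Proof.
  assert (H : is_derive (fun u => u) t 1).
  { apply is_derive_Reals. apply derivable_pt_lim_id. }
  pose proof (D_scal _ _ a _ H) as H2. rewrite Rmult_1_r in H2. exact H2.
Qed.

Lemma D_cosh (a t : R) : is_derive (fun u => cosh (a * u)) t (a * sinh (a * t)).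
Proof.
  apply (is_derive_comp cosh (fun u => a * u) t (sinh (a * t)) a).
  - apply is_derive_Reals. apply derivable_pt_lim_cosh.
  - apply D_lin.
Qed.

Lemma D_sinh (a t : R) : is_derive (fun u => sinh (a * u)) t (a * cosh (a * t)).
Proof.
  apply (is_derive_comp sinh (fun u => a * u) t (cosh (a * t)) a).
  - apply is_derive_Reals. apply derivable_pt_lim_sinh.
  - apply D_lin.
Qed.

Lemma ch2 (x : R) : cosh x * cosh x - sinh x * sinh x = 1.
Proof.
  unfold cosh, sinh.
  assert (H : exp x * exp (- x) = 1).
  { rewrite <- exp_plus. replace (x + - x) with 0 by ring. apply exp_0. }
  field_simplify. rewrite <- H. field.
Qed.

Lemma Derive_loc0 (f : R -> R) x :
  locally x (fun u => f u = 0) -> Derive f x = 0.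
Proof.
  intros H. rewrite (Derive_ext_loc f (fun _ => 0) x H). apply Derive_const.
Qed.

Lemma D_ext (f g : R -> R) x l : (forall t, f t = g t) -> is_derive f x l -> is_derive g x l.
Proof. intros H1 H2. exact (is_derive_ext f g x l H1 H2). Qed.

Lemma D_ext_loc (f g : R -> R) x l : locally x (fun t => f t = g t) -> is_derive f x l -> is_derive g x l.
Proof. intros H1 H2. exact (is_derive_ext_loc f g x l H1 H2). Qed.

Lemma D_unique (f : R -> R) x l : is_derive f x l -> Derive f x = l.
Proof. intros H. exact (is_derive_unique f x l H). Qed.

Lemma Derive_locc (f : R -> R) x c0 :
  locally x (fun u => f u = c0) -> Derive f x = 0.
Proof.
  intros H. rewrite (Derive_ext_loc f (fun _ => c0) x H). apply Derive_const.
Qed.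

Lemma ch2p (x : R) : cosh x ^ 2 = 1 + sinh x ^ 2.
Proof. pose proof (ch2 x). nra. Qed.

Definition isproj (p : V3 -> R) : Prop := p = x1 \/ p = x2 \/ p = x3.

Lemma proj_add p u v : isproj p -> p (vadd u v) = p u + p v.
Proof. intros [->|[->| ->]]; reflexivity. Qed.
Lemma proj_scal p a u : isproj p -> p (vscal a u) = a * p u.
Proof. intros [->|[->| ->]]; reflexivity. Qed.
Lemma proj_dV p f r : isproj p -> p (dV f r) = Derive (fun u => p (f u)) r.
Proof. intros [->|[->| ->]]; reflexivity. Qed.
Lemma proj_zero p : isproj p -> p (0,0,0) = 0.
Proof. intros [->|[->| ->]]; reflexivity. Qed.
Lemma proj_ext u v : (forall p, isproj p -> p u = p v) -> u = v.
Proof.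
  intros H. destruct u as [[u1 u2] u3], v as [[v1 v2] v3].
  pose proof (H x1 (or_introl eq_refl)) as E1.
  pose proof (H x2 (or_intror (or_introl eq_refl))) as E2.
  pose proof (H x3 (or_intror (or_intror eq_refl))) as E3.
  cbv [x1 x2 x3 fst snd] in E1, E2, E3. subst; reflexivity.
Qed.

Definition v0 : V3 := (0,0,0).

Lemma lor_sym x y : lor x y = lor y x.
Proof. unfold lor; ring. Qed.
Lemma lor_addl x y z : lor (vadd x y) z = lor x z + lor y z.
Proof. unfold lor, vadd, x1, x2, x3; simpl; ring. Qed.
Lemma lor_addr x y z : lor z (vadd x y) = lor z x + lor z y.
Proof. unfold lor, vadd, x1, x2, x3; simpl; ring. Qed.
Lemma lor_scall a x z : lor (vscal a x) z = a * lor x z.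
Proof. unfold lor, vscal, x1, x2, x3; simpl; ring. Qed.
Lemma lor_scalr a x z : lor z (vscal a x) = a * lor z x.
Proof. unfold lor, vscal, x1, x2, x3; simpl; ring. Qed.
Lemma lor_0l z : lor v0 z = 0.
Proof. unfold lor, v0, x1, x2, x3; simpl; ring. Qed.
Lemma lor_0r z : lor z v0 = 0.
Proof. unfold lor, v0, x1, x2, x3; simpl; ring. Qed.

Ltac lorsimp := repeat (rewrite ?lor_addl, ?lor_addr, ?lor_scall, ?lor_scalr, ?lor_0l, ?lor_0r).
Ltac lorsimp_in H := repeat (rewrite ?lor_addl, ?lor_addr, ?lor_scall, ?lor_scalr, ?lor_0l, ?lor_0r in H).

Definition frame (gam N : R -> V3) (k : R -> R) (r : R) : Prop :=
  lor (gam r) (gam r) = -1 /\ lor (dV gam r) (dV gam r) = 1 /\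
  lor (N r) (N r) = 1 /\ lor (N r) (gam r) = 0 /\ lor (N r) (dV gam r) = 0 /\
  lor (gam r) (dV gam r) = 0.

Lemma smooth_ex1 I f r : smooth_on I f -> I r -> ex_derive f r.
Proof. intros H Hr. exact (H r Hr 1%nat). Qed.
Lemma smooth_ex2 I f r : smooth_on I f -> I r -> ex_derive (Derive f) r.
Proof. intros H Hr. exact (H r Hr 2%nat). Qed.

Lemma smoothV_proj I f p : smoothV_on I f -> isproj p -> smooth_on I (fun u => p (f u)).
Proof. intros (H1 & H2 & H3) [->|[->| ->]]; assumption. Qed.

Lemma frenet_der_gam I gam N k p r : frenet_curve I gam N k -> I r -> isproj p ->
  is_derive (fun u => p (gam u)) r (p (dV gam r)).
Proof.
  intros (HI & Hg & HN & Hk & H) Hr Hp. rewrite proj_dV by exact Hp.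
  apply Derive_correct. eapply smooth_ex1; [apply (smoothV_proj _ _ _ Hg Hp)|exact Hr].
Qed.

Lemma frenet_der_N I gam N k p r : frenet_curve I gam N k -> I r -> isproj p ->
  is_derive (fun u => p (N u)) r (- k r * p (dV gam r)).
Proof.
  intros HF Hr Hp. pose proof HF as (HI & Hg & HN & Hk & H).
  destruct (H r Hr) as (_ & _ & _ & _ & _ & _ & HdN).
  rewrite <- proj_scal by exact Hp. rewrite <- HdN. rewrite proj_dV by exact Hp.
  apply Derive_correct. eapply smooth_ex1; [apply (smoothV_proj _ _ _ HN Hp)|exact Hr].
Qed.

Lemma frenet_der_dgam I gam N k p r : frenet_curve I gam N k -> I r -> isproj p ->
  is_derive (fun u => p (dV gam u)) r (p (gam r) + k r * p (N r)).
Proof.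
  intros HF Hr Hp. pose proof HF as (HI & Hg & HN & Hk & H).
  destruct (H r Hr) as (_ & _ & _ & _ & _ & Hdd & _).
  rewrite <- proj_scal, <- proj_add by exact Hp. rewrite <- Hdd.
  assert (E : forall u, p (dV gam u) = Derive (fun v => p (gam v)) u).
  { intros u. apply proj_dV. exact Hp. }
  rewrite (proj_dV p (dV gam) r Hp).
  rewrite (Derive_ext _ (Derive (fun v => p (gam v))) r E).
  apply (D_ext (Derive (fun v => p (gam v)))).
  { intros u. symmetry. apply E. }
  apply Derive_correct. eapply smooth_ex2; [apply (smoothV_proj _ _ _ Hg Hp)|exact Hr].
Qed.

Lemma frenet_der_k I gam N k r : frenet_curve I gam N k -> I r ->
  is_derive k r (Derive k r).
Proof.
  intros (HI & Hg & HN & Hk & H) Hr. apply Derive_correct. eapply smooth_ex1; eauto.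
Qed.

Lemma lor_der (f g : R -> V3) r :
  (forall p, isproj p -> is_derive (fun u => p (f u)) r (p (dV f r))) ->
  (forall p, isproj p -> is_derive (fun u => p (g u)) r (p (dV g r))) ->
  is_derive (fun u => lor (f u) (g u)) r (lor (dV f r) (g r) + lor (f r) (dV g r)).
Proof.
  intros Hf Hg.
  assert (P1 : isproj x1) by (left; reflexivity).
  assert (P2 : isproj x2) by (right; left; reflexivity).
  assert (P3 : isproj x3) by (right; right; reflexivity).
  assert (L : lor (dV f r) (g r) + lor (f r) (dV g r) =
    (- (x1 (dV f r) * x1 (g r) + x1 (f r) * x1 (dV g r))) +
     (x2 (dV f r) * x2 (g r) + x2 (f r) * x2 (dV g r)) +
     (x3 (dV f r) * x3 (g r) + x3 (f r) * x3 (dV g r))) by (unfold lor; ring).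
  rewrite L.
  apply (D_ext (fun u => (- (x1 (f u) * x1 (g u))) + x2 (f u) * x2 (g u) + x3 (f u) * x3 (g u))).
  { intros u. unfold lor. ring. }
  apply D_plus; [apply D_plus|].
  - apply (D_ext (fun u => - (x1 (f u) * x1 (g u)))); [intros; ring|].
    apply D_opp. apply D_mult; auto.
  - apply D_mult; auto.
  - apply D_mult; auto.
Qed.

Lemma frenet_frame I gam N k r : frenet_curve I gam N k -> I r -> frame gam N k r.
Proof.
  intros HF Hr. pose proof HF as (HI & Hg & HN & Hk & H).
  destruct (H r Hr) as ([Hgg _] & Hdd & HNN & HNg & HNd & _ & _).
  repeat split; auto.
  assert (D : is_derive (fun u => lor (gam u) (gam u)) r
                (lor (dV gam r) (gam r) + lor (gam r) (dV gam r))).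
  { apply lor_der; intros p Hp; eapply frenet_der_gam; eauto. }
  assert (D0 : Derive (fun u => lor (gam u) (gam u)) r = 0).
  { apply (Derive_locc _ _ (-1)). destruct (HI r Hr) as [eps Heps].
    exists eps. intros y Hy. destruct (H y (Heps y Hy)) as ([Hy1 _] & _). exact Hy1. }
  pose proof (D_unique (fun u => lor (gam u) (gam u)) r _ D) as E. rewrite E in D0. rewrite lor_sym in D0. lra.
Qed.

Lemma dV_is (f : R -> V3) t L :
  (forall p, isproj p -> is_derive (fun u => p (f u)) t (p L)) -> dV f t = L.
Proof.
  intros H. apply proj_ext. intros p Hp. rewrite proj_dV by exact Hp.
  apply D_unique. apply H. exact Hp.
Qed.

Lemma dV_const (L : V3) t : dV (fun _ => L) t = v0.
Proof. unfold dV, v0. rewrite !Derive_const. reflexivity. Qed.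

Definition IsDV (f : R -> V3) t L := forall p, isproj p -> is_derive (fun u => p (f u)) t (p L).

Lemma IsDV_dV f t L : IsDV f t L -> dV f t = L.
Proof. apply dV_is. Qed.

Lemma IsDV_scal f t L a : IsDV f t L -> IsDV (fun u => vscal a (f u)) t (vscal a L).
Proof.
  intros H p Hp. rewrite proj_scal by exact Hp.
  apply (D_ext (fun u => a * p (f u))). { intros u. rewrite proj_scal by exact Hp. reflexivity. }
  apply D_scal. apply H. exact Hp.
Qed.

Lemma dV_ext_loc (f g : R -> V3) r : locally r (fun u => f u = g u) -> dV f r = dV g r.
Proof.
  intros H. unfold dV. f_equal; [f_equal|]; apply Derive_ext_loc;
  destruct H as [eps He]; exists eps; intros y Hy; rewrite (He y Hy); reflexivity.
Qed.

Lemma dP_ext_loc (f g : R -> V6) r : locally r (fun u => f u = g u) -> dP f r = dP g r.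
Proof.
  intros H. unfold dP. f_equal; apply dV_ext_loc;
  destruct H as [eps He]; exists eps; intros y Hy; rewrite (He y Hy); reflexivity.
Qed.

Definition Af (a t kk : R) := cosh (a * t) - kk * sinh (a * t).
Definition Atf (a t kk : R) := a * (sinh (a * t) - kk * cosh (a * t)).
Definition Tv (a t : R) (g n : V3) := vadd (vscal (sinh (a * t)) g) (vscal (cosh (a * t)) n).
Definition Pv (a t : R) (g n : V3) := vadd (vscal (cosh (a * t)) g) (vscal (sinh (a * t)) n).

Lemma Mc_eq c gam N gam2 N2 y :
  Mc c gam N gam2 N2 y =
  (Pv (sqrt c) (x1 y) (gam (x2 y)) (N (x2 y)),
   Pv (sqrt (1 - c)) (x1 y) (gam2 (x3 y)) (N2 (x3 y))).
Proof. reflexivity. Qed.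

Lemma der_Pv_t a t g n :
  IsDV (fun u => Pv a u g n) t (vscal a (Tv a t g n)).
Proof.
  unfold IsDV. intros p Hp.
  apply (D_ext (fun u => cosh (a * u) * p g + sinh (a * u) * p n)).
  { intros u. unfold Pv. rewrite proj_add, !proj_scal by exact Hp. ring. }
  replace (p (vscal a (Tv a t g n))) with (a * sinh (a * t) * p g + a * cosh (a * t) * p n).
  2:{ unfold Tv. rewrite proj_scal, proj_add, !proj_scal by exact Hp. ring. }
  apply D_plus.
  - apply (D_ext (fun u => p g * cosh (a * u))); [intros; ring|].
    replace (a * sinh (a * t) * p g) with (p g * (a * sinh (a * t))) by ring.
    apply D_scal, D_cosh.
  - apply (D_ext (fun u => p n * sinh (a * u))); [intros; ring|].
    replace (a * cosh (a * t) * p n) with (p n * (a * cosh (a * t))) by ring.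
    apply D_scal, D_sinh.
Qed.

Lemma der_Tv_t a t g n :
  IsDV (fun u => Tv a u g n) t (vscal a (Pv a t g n)).
Proof.
  unfold IsDV. intros p Hp.
  apply (D_ext (fun u => sinh (a * u) * p g + cosh (a * u) * p n)).
  { intros u. unfold Tv. rewrite proj_add, !proj_scal by exact Hp. ring. }
  replace (p (vscal a (Pv a t g n))) with (a * cosh (a * t) * p g + a * sinh (a * t) * p n).
  2:{ unfold Pv. rewrite proj_scal, proj_add, !proj_scal by exact Hp. ring. }
  apply D_plus.
  - apply (D_ext (fun u => p g * sinh (a * u))); [intros; ring|].
    replace (a * cosh (a * t) * p g) with (p g * (a * cosh (a * t))) by ring.
    apply D_scal, D_sinh.
  - apply (D_ext (fun u => p n * cosh (a * u))); [intros; ring|].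
    replace (a * sinh (a * t) * p n) with (p n * (a * sinh (a * t))) by ring.
    apply D_scal, D_cosh.
Qed.

Lemma der_Pv_r I gam N k a t r : frenet_curve I gam N k -> I r ->
  dV (fun u => Pv a t (gam u) (N u)) r = vscal (Af a t (k r)) (dV gam r).
Proof.
  intros HF Hr. apply dV_is. intros p Hp.
  apply (D_ext (fun u => cosh (a * t) * p (gam u) + sinh (a * t) * p (N u))).
  { intros u. unfold Pv. rewrite proj_add, !proj_scal by exact Hp. ring. }
  replace (p (vscal (Af a t (k r)) (dV gam r))) with
    (cosh (a * t) * p (dV gam r) + sinh (a * t) * (- k r * p (dV gam r))).
  2:{ unfold Af. rewrite proj_scal by exact Hp. ring. }
  apply D_plus; apply D_scal.
  - eapply frenet_der_gam; eauto.
  - eapply frenet_der_N; eauto.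
Qed.

Lemma der_Af_dgam_r I gam N k a t r : frenet_curve I gam N k -> I r ->
  dV (fun u => vscal (Af a t (k u)) (dV gam u)) r =
  vadd (vscal (- Derive k r * sinh (a * t)) (dV gam r))
       (vscal (Af a t (k r)) (vadd (gam r) (vscal (k r) (N r)))).
Proof.
  intros HF Hr. apply dV_is. intros p Hp.
  apply (D_ext (fun u => Af a t (k u) * p (dV gam u))).
  { intros u. rewrite proj_scal by exact Hp. reflexivity. }
  rewrite proj_add, !proj_scal, proj_add, proj_scal by exact Hp.
  replace (- Derive k r * sinh (a * t) * p (dV gam r) +
    Af a t (k r) * (p (gam r) + k r * p (N r))) with
    ((- Derive k r * sinh (a * t)) * p (dV gam r) + Af a t (k r) * (p (gam r) + k r * p (N r))) by ring.
  apply (D_mult (fun u => Af a t (k u)) (fun u => p (dV gam u))).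
  - unfold Af. apply (D_ext (fun u => cosh (a * t) - sinh (a * t) * k u)); [intros; ring|].
    replace (- Derive k r * sinh (a * t)) with (0 - sinh (a * t) * Derive k r) by ring.
    apply D_minus; [apply D_const|]. apply D_scal. eapply frenet_der_k; eauto.
  - eapply frenet_der_dgam; eauto.
Qed.

Definition pFv c (gam N gam2 N2 : R -> V3) (k k2 : R -> R) (i : nat) (y : V3) : V6 :=
  let t := x1 y in let r := x2 y in let s := x3 y in
  let a := sqrt c in let b := sqrt (1 - c) in
  match i with
  | O => (vscal a (Tv a t (gam r) (N r)), vscal b (Tv b t (gam2 s) (N2 s)))
  | 1%nat => (vscal (Af a t (k r)) (dV gam r), v0)
  | _ => (v0, vscal (Af b t (k2 s)) (dV gam2 s))
  end.

Lemma pF_eq c gam N gam2 N2 k k2 I I2 i y :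
  frenet_curve I gam N k -> frenet_curve I2 gam2 N2 k2 ->
  I (x2 y) -> I2 (x3 y) ->
  pF i (Mc c gam N gam2 N2) y = pFv c gam N gam2 N2 k k2 i y.
Proof.
  intros HF1 HF2 Hr Hs. destruct y as [[t r] s].
  destruct i as [|[|i]].
  - change (pF 0 (Mc c gam N gam2 N2) (t, r, s)) with
      (dV (fun u => Pv (sqrt c) u (gam r) (N r)) t,
       dV (fun u => Pv (sqrt (1 - c)) u (gam2 s) (N2 s)) t).
    rewrite !IsDV_dV with (L := vscal _ (Tv _ _ _ _)) by apply der_Pv_t. reflexivity.
  - change (pF 1 (Mc c gam N gam2 N2) (t, r, s)) with
      (dV (fun u => Pv (sqrt c) t (gam u) (N u)) r,
       dV (fun _ => Pv (sqrt (1 - c)) t (gam2 s) (N2 s)) r).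
    rewrite dV_const. erewrite der_Pv_r by eauto. reflexivity.
  - change (pF (S (S i)) (Mc c gam N gam2 N2) (t, r, s)) with
      (dV (fun _ => Pv (sqrt c) t (gam r) (N r)) s,
       dV (fun u => Pv (sqrt (1 - c)) t (gam2 u) (N2 u)) s).
    rewrite dV_const. erewrite der_Pv_r by eauto. reflexivity.
Qed.

Lemma line_good (I I2 : R -> Prop) y i : open I -> open I2 -> I (x2 y) -> I2 (x3 y) ->
  locally (coord y i) (fun u => I (x2 (upd y i u)) /\ I2 (x3 (upd y i u))).
Proof.
  intros HI HI2 Hr Hs. destruct y as [[t r] s].
  destruct i as [|[|i]]; simpl.
  - exists (mkposreal 1 Rlt_0_1). intros; split; assumption.
  - destruct (HI r Hr) as [eps He]. exists eps. intros u Hu. split; [apply He; exact Hu| exact Hs].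
  - destruct (HI2 s Hs) as [eps He]. exists eps. intros u Hu. split; [exact Hr| apply He; exact Hu].
Qed.

Lemma frenet_open I gam N k : frenet_curve I gam N k -> open I.
Proof. intros (H & _); exact H. Qed.

Lemma pF_loc c gam N gam2 N2 k k2 I I2 i j y :
  frenet_curve I gam N k -> frenet_curve I2 gam2 N2 k2 ->
  I (x2 y) -> I2 (x3 y) ->
  pF i (pF j (Mc c gam N gam2 N2)) y =
  dP (fun u => pFv c gam N gam2 N2 k k2 j (upd y i u)) (coord y i).
Proof.
  intros HF1 HF2 Hr Hs. unfold pF at 1. apply dP_ext_loc.
  destruct (line_good I I2 y i (frenet_open _ _ _ _ HF1) (frenet_open _ _ _ _ HF2) Hr Hs) as [eps He].
  exists eps. intros u Hu. destruct (He u Hu) as [H1 H2]. eapply pF_eq; eauto.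
Qed.

Lemma pF00 c gam N gam2 N2 k k2 I I2 y :
  frenet_curve I gam N k -> frenet_curve I2 gam2 N2 k2 ->
  I (x2 y) -> I2 (x3 y) ->
  pF 0 (pF 0 (Mc c gam N gam2 N2)) y =
  (vscal (sqrt c) (vscal (sqrt c) (Pv (sqrt c) (x1 y) (gam (x2 y)) (N (x2 y)))),
   vscal (sqrt (1 - c)) (vscal (sqrt (1 - c)) (Pv (sqrt (1 - c)) (x1 y) (gam2 (x3 y)) (N2 (x3 y))))).
Proof.
  intros HF1 HF2 Hr Hs. erewrite pF_loc by eauto. destruct y as [[t r] s].
  unfold dP. cbn [x1 x2 x3 fst snd upd coord pFv] in *. f_equal; apply IsDV_dV; apply IsDV_scal; apply der_Tv_t.
Qed.

Lemma pF11 c gam N gam2 N2 k k2 I I2 y :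
  frenet_curve I gam N k -> frenet_curve I2 gam2 N2 k2 ->
  I (x2 y) -> I2 (x3 y) ->
  pF 1 (pF 1 (Mc c gam N gam2 N2)) y =
  (vadd (vscal (- Derive k (x2 y) * sinh (sqrt c * x1 y)) (dV gam (x2 y)))
       (vscal (Af (sqrt c) (x1 y) (k (x2 y))) (vadd (gam (x2 y)) (vscal (k (x2 y)) (N (x2 y))))),
   v0).
Proof.
  intros HF1 HF2 Hr Hs. erewrite pF_loc by eauto. destruct y as [[t r] s].
  unfold dP. cbn [x1 x2 x3 fst snd upd coord pFv] in *. f_equal.
  - eapply der_Af_dgam_r; eauto.
  - apply dV_const.
Qed.

Lemma pF22 c gam N gam2 N2 k k2 I I2 y :
  frenet_curve I gam N k -> frenet_curve I2 gam2 N2 k2 ->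
  I (x2 y) -> I2 (x3 y) ->
  pF 2 (pF 2 (Mc c gam N gam2 N2)) y =
  (v0, vadd (vscal (- Derive k2 (x3 y) * sinh (sqrt (1 - c) * x1 y)) (dV gam2 (x3 y)))
       (vscal (Af (sqrt (1 - c)) (x1 y) (k2 (x3 y))) (vadd (gam2 (x3 y)) (vscal (k2 (x3 y)) (N2 (x3 y)))))).
Proof.
  intros HF1 HF2 Hr Hs. erewrite pF_loc by eauto. destruct y as [[t r] s].
  unfold dP. cbn [x1 x2 x3 fst snd upd coord pFv] in *. f_equal.
  - apply dV_const.
  - eapply der_Af_dgam_r; eauto.
Qed.

Lemma frame_sym gam N k r : frame gam N k r ->
  lor (gam r) (gam r) = -1 /\ lor (dV gam r) (dV gam r) = 1 /\
  lor (N r) (N r) = 1 /\ lor (N r) (gam r) = 0 /\ lor (N r) (dV gam r) = 0 /\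
  lor (gam r) (dV gam r) = 0 /\ lor (gam r) (N r) = 0 /\ lor (dV gam r) (N r) = 0 /\
  lor (dV gam r) (gam r) = 0.
Proof.
  intros (H1 & H2 & H3 & H4 & H5 & H6). repeat split; auto; rewrite lor_sym; auto.
Qed.

Ltac frame_rw H :=
  let h1 := fresh in let h2 := fresh in let h3 := fresh in let h4 := fresh in
  let h5 := fresh in let h6 := fresh in let h7 := fresh in let h8 := fresh in
  let h9 := fresh in
  destruct (frame_sym _ _ _ _ H) as (h1 & h2 & h3 & h4 & h5 & h6 & h7 & h8 & h9);
  rewrite ?h1, ?h2, ?h3, ?h4, ?h5, ?h6, ?h7, ?h8, ?h9; clear h1 h2 h3 h4 h5 h6 h7 h8 h9.

Definition n2 (i : nat) : nat := match i with O => O | 1%nat => 1%nat | _ => 2%nat end.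

Definition Gv c (k k2 : R -> R) (i m : nat) (y : V3) : R :=
  match n2 i, n2 m with
  | O, O => 1
  | 1%nat, 1%nat => Af (sqrt c) (x1 y) (k (x2 y)) ^ 2
  | 2%nat, 2%nat => Af (sqrt (1 - c)) (x1 y) (k2 (x3 y)) ^ 2
  | _, _ => 0
  end.

Lemma sqrt_sq c : 0 <= c -> sqrt c * sqrt c = c.
Proof. apply sqrt_sqrt. Qed.

Lemma gm_eq c gam N gam2 N2 k k2 I I2 i m y :
  0 < c < 1 ->
  frenet_curve I gam N k -> frenet_curve I2 gam2 N2 k2 ->
  I (x2 y) -> I2 (x3 y) ->
  gm (Mc c gam N gam2 N2) i m y = Gv c k k2 i m y.
Proof.
  intros Hc HF1 HF2 Hr Hs. unfold gm. rewrite !(pF_eq c gam N gam2 N2 k k2 I I2) by auto.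
  pose proof (frenet_frame _ _ _ _ _ HF1 Hr) as Fr1.
  pose proof (frenet_frame _ _ _ _ _ HF2 Hs) as Fr2.
  pose proof (ch2 (sqrt c * x1 y)) as C1.
  pose proof (ch2 (sqrt (1 - c) * x1 y)) as C2.
  pose proof (sqrt_sq c ltac:(lra)) as S1.
  pose proof (sqrt_sq (1 - c) ltac:(lra)) as S2.
  destruct i as [|[|i]]; destruct m as [|[|m]];
  unfold pFv, Gv, n2, ip6, Tv; cbv zeta; cbn [fst snd]; lorsimp; frame_rw Fr1; frame_rw Fr2;
  try ring; try nra.
Qed.

Lemma D_Af_t a t kk : is_derive (fun u => Af a u kk) t (Atf a t kk).
Proof.
  unfold Af, Atf.
  replace (a * (sinh (a * t) - kk * cosh (a * t))) with (a * sinh (a * t) - kk * (a * cosh (a * t))) by ring.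
  apply D_minus; [apply D_cosh| apply D_scal, D_sinh].
Qed.

Lemma D_sq (f : R -> R) x l : is_derive f x l -> is_derive (fun u => f u ^ 2) x (2 * f x * l).
Proof.
  intros H. apply (D_ext (fun u => f u * f u)); [intros; ring|].
  replace (2 * f x * l) with (l * f x + f x * l) by ring. apply D_mult; exact H.
Qed.

Lemma D_Af_k I gam N k a t r : frenet_curve I gam N k -> I r ->
  is_derive (fun u => Af a t (k u)) r (- Derive k r * sinh (a * t)).
Proof.
  intros HF Hr. unfold Af.
  apply (D_ext (fun u => cosh (a * t) - sinh (a * t) * k u)); [intros; ring|].
  replace (- Derive k r * sinh (a * t)) with (0 - sinh (a * t) * Derive k r) by ring.
  apply D_minus; [apply D_const|]. apply D_scal. eapply frenet_der_k; eauto.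
Qed.

Definition DGv c (k k2 : R -> R) (l i m : nat) (y : V3) : R :=
  let t := x1 y in let r := x2 y in let s := x3 y in
  let a := sqrt c in let b := sqrt (1 - c) in
  match n2 i, n2 m with
  | 1%nat, 1%nat => match n2 l with
                    | O => 2 * Af a t (k r) * Atf a t (k r)
                    | 1%nat => 2 * Af a t (k r) * (- Derive k r * sinh (a * t))
                    | _ => 0 end
  | 2%nat, 2%nat => match n2 l with
                    | O => 2 * Af b t (k2 s) * Atf b t (k2 s)
                    | 1%nat => 0
                    | _ => 2 * Af b t (k2 s) * (- Derive k2 s * sinh (b * t)) end
  | _, _ => 0
  end.

Lemma pd_gm_loc c gam N gam2 N2 k k2 I I2 l i m y :
  0 < c < 1 ->
  frenet_curve I gam N k -> frenet_curve I2 gam2 N2 k2 ->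
  I (x2 y) -> I2 (x3 y) ->
  pd l (gm (Mc c gam N gam2 N2) i m) y =
  Derive (fun u => Gv c k k2 i m (upd y l u)) (coord y l).
Proof.
  intros Hc HF1 HF2 Hr Hs. unfold pd. apply Derive_ext_loc.
  destruct (line_good I I2 y l (frenet_open _ _ _ _ HF1) (frenet_open _ _ _ _ HF2) Hr Hs) as [eps He].
  exists eps. intros u Hu. destruct (He u Hu) as [H1 H2]. eapply gm_eq; eauto.
Qed.

Lemma pd_gm_eq c gam N gam2 N2 k k2 I I2 l i m y :
  0 < c < 1 ->
  frenet_curve I gam N k -> frenet_curve I2 gam2 N2 k2 ->
  I (x2 y) -> I2 (x3 y) ->
  pd l (gm (Mc c gam N gam2 N2) i m) y = DGv c k k2 l i m y.
Proof.
  intros Hc HF1 HF2 Hr Hs. erewrite pd_gm_loc by eauto.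
  destruct y as [[t r] s].
  destruct i as [|[|i]]; destruct m as [|[|m]]; destruct l as [|[|l]].
  all: unfold Gv, DGv, n2; cbn [x1 x2 x3 fst snd upd coord]; cbv zeta.
  all: try apply Derive_const.
  all: apply D_unique.
  - apply (D_sq (fun u => Af (sqrt c) u (k r))). apply D_Af_t.
  - apply (D_sq (fun u => Af (sqrt c) t (k u))). exact (D_Af_k _ _ _ _ _ _ _ HF1 Hr).
  - apply (D_sq (fun u => Af (sqrt (1 - c)) u (k2 s))). apply D_Af_t.
  - apply (D_sq (fun u => Af (sqrt (1 - c)) t (k2 u))). exact (D_Af_k _ _ _ _ _ _ _ HF2 Hs).
Qed.

Lemma ballR (x y e : R) : ball x e y <-> Rabs (y - x) < e.
Proof. unfold ball; simpl; unfold AbsRing_ball, abs, minus, plus, opp; simpl. tauto. Qed.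

Lemma ball3 (x y : V3) e :
  ball x e y <-> Rabs (x1 y - x1 x) < e /\ Rabs (x2 y - x2 x) < e /\ Rabs (x3 y - x3 x) < e.
Proof.
  destruct x as [[a b] c], y as [[a' b'] c'].
  change (ball (a, b, c) e (a', b', c')) with ((ball a e a' /\ ball b e b') /\ ball c e c').
  rewrite !ballR. unfold x1, x2, x3; simpl. tauto.
Qed.

Lemma open_line (U : V3 -> Prop) y i : open U -> U y ->
  locally (coord y i) (fun u => U (upd y i u)).
Proof.
  intros HU Hy. destruct (HU y Hy) as [eps He]. exists eps. intros u Hu.
  apply He. apply ball3. apply ballR in Hu.
  destruct y as [[t r] s]. destruct i as [|[|i]]; cbn [x1 x2 x3 upd coord fst snd] in *;
  unfold Rminus; rewrite ?Rplus_opp_r, ?Rabs_R0; repeat split; try exact Hu; apply cond_pos.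
Qed.

Lemma const_on_U (U : V3 -> Prop) (phi : V3 -> R) :
  connected3 U ->
  (forall y, U y -> locally y (fun z => U z /\ phi z = phi y)) ->
  forall y z, U y -> U z -> phi z = phi y.
Proof.
  intros HC Hloc y z Hy Hz.
  destruct (Req_dec (phi z) (phi y)) as [E|NE]; [exact E|exfalso].
  set (v := phi y).
  apply (HC (fun w => locally w (fun q => U q /\ phi q = v))
            (fun w => locally w (fun q => U q /\ phi q <> v))).
  - intros w Hw. apply locally_locally. exact Hw.
  - intros w Hw. apply locally_locally. exact Hw.
  - intros w Hw. destruct (Req_dec (phi w) v) as [E|NE2].
    + left. rewrite <- E. apply Hloc. exact Hw.
    + right. destruct (Hloc w Hw) as [eps He]. exists eps. intros q Hq.
      destruct (He q Hq) as [H1 H2]. split; [exact H1|]. rewrite H2. exact NE2.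
  - intros w _ HA HB. apply locally_singleton in HA. apply locally_singleton in HB.
    destruct HA as [_ HA]; destruct HB as [_ HB]. exact (HB HA).
  - exists y. split; [exact Hy|]. apply Hloc. exact Hy.
  - exists z. split; [exact Hz|]. destruct (Hloc z Hz) as [eps He]. exists eps. intros q Hq.
    destruct (He q Hq) as [H1 H2]. split; [exact H1|]. rewrite H2. exact NE.
Qed.

Lemma k_const (U : V3 -> Prop) (k : R -> R) :
  open U -> connected3 U ->
  (forall y z, U y -> U z -> x1 z = x1 y -> x3 z = x3 y -> k (x2 z) = k (x2 y)) ->
  forall y z, U y -> U z -> k (x2 z) = k (x2 y).
Proof.
  intros HU HC H.
  apply (const_on_U U (fun w => k (x2 w)) HC).
  intros y Hy. destruct (HU y Hy) as [eps He]. exists eps. intros z Hz.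
  split; [apply He; exact Hz|].
  assert (Hw : U (upd y 1 (x2 z))).
  { apply He. apply ball3. apply ball3 in Hz. destruct y as [[t r] s].
    cbn [x1 x2 x3 upd fst snd] in *. unfold Rminus in *.
    destruct Hz as (_ & H2 & _). repeat split; first [exact H2 | rewrite Rplus_opp_r, Rabs_R0; apply cond_pos]. }
  transitivity (k (x2 (upd y 1 (x2 z)))).
  - destruct y as [[t r] s]; reflexivity.
  - apply H; auto; destruct y as [[t r] s]; reflexivity.
Qed.

Lemma detg_eq c gam N gam2 N2 k k2 I I2 y :
  0 < c < 1 ->
  frenet_curve I gam N k -> frenet_curve I2 gam2 N2 k2 ->
  I (x2 y) -> I2 (x3 y) ->
  detg (Mc c gam N gam2 N2) y =
  Af (sqrt c) (x1 y) (k (x2 y)) ^ 2 * Af (sqrt (1 - c)) (x1 y) (k2 (x3 y)) ^ 2.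
Proof.
  intros Hc HF1 HF2 Hr Hs. unfold detg, cof, sum3. cbn [Nat.add Nat.modulo Nat.divmod fst snd].
  rewrite !(gm_eq c gam N gam2 N2 k k2 I I2) by auto. unfold Gv, n2; simpl. ring.
Qed.

Lemma mean_eq c gam N gam2 N2 k k2 I I2 y xi :
  0 < c < 1 ->
  frenet_curve I gam N k -> frenet_curve I2 gam2 N2 k2 ->
  I (x2 y) -> I2 (x3 y) ->
  Af (sqrt c) (x1 y) (k (x2 y)) <> 0 -> Af (sqrt (1 - c)) (x1 y) (k2 (x3 y)) <> 0 ->
  mean_curv (Mc c gam N gam2 N2) xi y =
  sff (Mc c gam N gam2 N2) xi 0 0 y
  + sff (Mc c gam N gam2 N2) xi 1 1 y / Af (sqrt c) (x1 y) (k (x2 y)) ^ 2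
  + sff (Mc c gam N gam2 N2) xi 2 2 y / Af (sqrt (1 - c)) (x1 y) (k2 (x3 y)) ^ 2.
Proof.
  intros Hc HF1 HF2 Hr Hs HA HB. unfold mean_curv, ginv.
  rewrite (detg_eq c gam N gam2 N2 k k2 I I2) by auto.
  unfold cof, sum3. cbn [Nat.add Nat.modulo Nat.divmod fst snd].
  rewrite !(gm_eq c gam N gam2 N2 k k2 I I2) by auto. unfold Gv, n2; simpl. field. auto.
Qed.

Lemma sqrt_half_eq (c : R) : c = 1/2 -> sqrt (1 - c) = sqrt c.
Proof. intros ->. f_equal. field. Qed.

Lemma sqrt_pos' c : 0 < c -> 0 < sqrt c.
Proof. apply sqrt_lt_R0. Qed.

Lemma unit_normal_eqs c gam N gam2 N2 k k2 I I2 y xi :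
  frenet_curve I gam N k -> frenet_curve I2 gam2 N2 k2 ->
  I (x2 y) -> I2 (x3 y) ->
  unit_normal (Mc c gam N gam2 N2) y xi ->
  let t := x1 y in let r := x2 y in let s := x3 y in
  let a := sqrt c in let b := sqrt (1 - c) in
  let u := fst xi in let v := snd xi in
  cosh (a * t) * lor u (gam r) + sinh (a * t) * lor u (N r) = 0 /\
  cosh (b * t) * lor v (gam2 s) + sinh (b * t) * lor v (N2 s) = 0 /\
  a * (sinh (a * t) * lor u (gam r) + cosh (a * t) * lor u (N r)) +
  b * (sinh (b * t) * lor v (gam2 s) + cosh (b * t) * lor v (N2 s)) = 0 /\
  Af a t (k r) * lor u (dV gam r) = 0 /\
  Af b t (k2 s) * lor v (dV gam2 s) = 0.
Proof.
  intros HF1 HF2 Hr Hs (Hn1 & Hn2 & Hn3 & Hn4). cbv zeta.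
  pose proof (Hn4 0%nat ltac:(lia)) as H0.
  pose proof (Hn4 1%nat ltac:(lia)) as H1.
  pose proof (Hn4 2%nat ltac:(lia)) as H2.
  rewrite (pF_eq c gam N gam2 N2 k k2 I I2) in H0, H1, H2 by auto.
  rewrite Mc_eq in Hn2, Hn3. unfold pFv, ip6, Tv, Pv in *. cbn [fst snd] in *.
  lorsimp. lorsimp_in H0. lorsimp_in H1. lorsimp_in H2. lorsimp_in Hn2. lorsimp_in Hn3.
  repeat split; lra.
Qed.

Lemma mean_formula c gam N gam2 N2 k k2 I I2 y xi :
  0 < c < 1 ->
  frenet_curve I gam N k -> frenet_curve I2 gam2 N2 k2 ->
  I (x2 y) -> I2 (x3 y) ->
  Af (sqrt c) (x1 y) (k (x2 y)) <> 0 -> Af (sqrt (1 - c)) (x1 y) (k2 (x3 y)) <> 0 ->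
  unit_normal (Mc c gam N gam2 N2) y xi ->
  mean_curv (Mc c gam N gam2 N2) xi y =
  (lor (fst xi) (gam (x2 y)) + k (x2 y) * lor (fst xi) (N (x2 y))) / Af (sqrt c) (x1 y) (k (x2 y))
  + (lor (snd xi) (gam2 (x3 y)) + k2 (x3 y) * lor (snd xi) (N2 (x3 y))) / Af (sqrt (1 - c)) (x1 y) (k2 (x3 y)).
Proof.
  intros Hc HF1 HF2 Hr Hs HA HB Hn.
  destruct (unit_normal_eqs c gam N gam2 N2 k k2 I I2 y xi HF1 HF2 Hr Hs Hn) as (E1 & E2 & E3 & E4 & E5).
  cbv zeta in E1, E2, E3, E4, E5.
  assert (L1 : lor (fst xi) (dV gam (x2 y)) = 0).
  { apply Rmult_eq_reg_l with (Af (sqrt c) (x1 y) (k (x2 y))); [lra|exact HA]. }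
  assert (L2 : lor (snd xi) (dV gam2 (x3 y)) = 0).
  { apply Rmult_eq_reg_l with (Af (sqrt (1 - c)) (x1 y) (k2 (x3 y))); [lra|exact HB]. }
  rewrite (mean_eq c gam N gam2 N2 k k2 I I2) by auto. unfold sff.
  rewrite (pF00 c gam N gam2 N2 k k2 I I2), (pF11 c gam N gam2 N2 k k2 I I2),
    (pF22 c gam N gam2 N2 k k2 I I2) by auto.
  unfold ip6, Pv; cbn [fst snd].
  rewrite (lor_sym _ (fst xi)), (lor_sym _ (snd xi)), (lor_sym v0 (snd xi)), (lor_sym v0 (fst xi)).
  rewrite (lor_sym _ (fst xi)), (lor_sym _ (snd xi)).
  lorsimp. rewrite L1, L2.
  replace (cosh (sqrt c * x1 y) * lor (fst xi) (gam (x2 y)) + sinh (sqrt c * x1 y) * lor (fst xi) (N (x2 y))) with 0 by lra.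
  replace (cosh (sqrt (1 - c) * x1 y) * lor (snd xi) (gam2 (x3 y)) + sinh (sqrt (1 - c) * x1 y) * lor (snd xi) (N2 (x3 y))) with 0 by lra.
  field. auto.
Qed.

Lemma AB_nz c gam N gam2 N2 k k2 I I2 y :
  0 < c < 1 ->
  frenet_curve I gam N k -> frenet_curve I2 gam2 N2 k2 ->
  I (x2 y) -> I2 (x3 y) ->
  0 < detg (Mc c gam N gam2 N2) y ->
  Af (sqrt c) (x1 y) (k (x2 y)) <> 0 /\ Af (sqrt (1 - c)) (x1 y) (k2 (x3 y)) <> 0.
Proof.
  intros Hc HF1 HF2 Hr Hs Hd.
  rewrite (detg_eq c gam N gam2 N2 k k2 I I2) in Hd by auto.
  split; intros E; rewrite E in Hd; lra.
Qed.

Lemma minimal_back c gam N gam2 N2 k k2 I I2 y xi k0 :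
  0 < c < 1 -> c = 1/2 ->
  frenet_curve I gam N k -> frenet_curve I2 gam2 N2 k2 ->
  I (x2 y) -> I2 (x3 y) ->
  0 < detg (Mc c gam N gam2 N2) y ->
  k (x2 y) = k0 -> k2 (x3 y) = k0 ->
  unit_normal (Mc c gam N gam2 N2) y xi ->
  mean_curv (Mc c gam N gam2 N2) xi y = 0.
Proof.
  intros Hc Hh HF1 HF2 Hr Hs Hd Hk1 Hk2 Hn.
  destruct (AB_nz c gam N gam2 N2 k k2 I I2 y Hc HF1 HF2 Hr Hs Hd) as [HA HB].
  destruct (unit_normal_eqs c gam N gam2 N2 k k2 I I2 y xi HF1 HF2 Hr Hs Hn) as (E1 & E2 & E3 & E4 & E5).
  cbv zeta in E1, E2, E3.
  rewrite (mean_formula c gam N gam2 N2 k k2 I I2) by auto.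
  rewrite (sqrt_half_eq c Hh) in *. rewrite Hk1, Hk2 in *.
  set (a := sqrt c) in *. set (C := cosh (a * x1 y)) in *. set (S := sinh (a * x1 y)) in *.
  assert (Ha : 0 < a) by (apply sqrt_pos'; lra).
  assert (CS : C * C - S * S = 1) by apply ch2.
  set (al := lor (fst xi) (gam (x2 y))) in *. set (be := lor (fst xi) (N (x2 y))) in *.
  set (al2 := lor (snd xi) (gam2 (x3 y))) in *. set (be2 := lor (snd xi) (N2 (x3 y))) in *.
  assert (E3' : S * (al + al2) + C * (be + be2) = 0).
  { apply Rmult_eq_reg_l with a; [|lra]. lra. }
  assert (X : al + al2 = 0).
  { replace (al + al2) with ((C * C - S * S) * (al + al2)) by (rewrite CS; ring).
    replace ((C * C - S * S) * (al + al2)) with (C * (C * al + S * be) + C * (C * al2 + S * be2) - S * (S * (al + al2) + C * (be + be2))) by ring.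
    rewrite E1, E2, E3'. ring. }
  assert (Y : be + be2 = 0).
  { replace (be + be2) with ((C * C - S * S) * (be + be2)) by (rewrite CS; ring).
    replace ((C * C - S * S) * (be + be2)) with (C * (S * (al + al2) + C * (be + be2)) - S * (C * al + S * be) - S * (C * al2 + S * be2)) by ring.
    rewrite E1, E2, E3'. ring. }
  set (A := Af a (x1 y) k0) in *.
  replace ((al + k0 * be) / A + (al2 + k0 * be2) / A) with ((al + al2 + k0 * (be + be2)) / A) by (field; exact HA).
  rewrite X, Y. field. exact HA.
Qed.

Definition xi0 c (gam N gam2 N2 : R -> V3) (y : V3) : V6 :=
  (vscal (sqrt (1 - c)) (Tv (sqrt c) (x1 y) (gam (x2 y)) (N (x2 y))),
   vscal (- sqrt c) (Tv (sqrt (1 - c)) (x1 y) (gam2 (x3 y)) (N2 (x3 y)))).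

Lemma xi0_unit c gam N gam2 N2 k k2 I I2 y :
  0 < c < 1 ->
  frenet_curve I gam N k -> frenet_curve I2 gam2 N2 k2 ->
  I (x2 y) -> I2 (x3 y) ->
  unit_normal (Mc c gam N gam2 N2) y (xi0 c gam N gam2 N2 y).
Proof.
  intros Hc HF1 HF2 Hr Hs.
  pose proof (frenet_frame _ _ _ _ _ HF1 Hr) as Fr1.
  pose proof (frenet_frame _ _ _ _ _ HF2 Hs) as Fr2.
  pose proof (ch2 (sqrt c * x1 y)) as C1.
  pose proof (ch2 (sqrt (1 - c) * x1 y)) as C2.
  pose proof (sqrt_sq c ltac:(lra)) as S1.
  pose proof (sqrt_sq (1 - c) ltac:(lra)) as S2.
  unfold unit_normal. repeat split.
  - unfold xi0, ip6, Tv; cbn [fst snd]. lorsimp. frame_rw Fr1. frame_rw Fr2. nra.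
  - rewrite Mc_eq. unfold xi0, Tv, Pv; cbn [fst snd]. lorsimp. frame_rw Fr1. ring.
  - rewrite Mc_eq. unfold xi0, Tv, Pv; cbn [fst snd]. lorsimp. frame_rw Fr2. ring.
  - intros i Hi. rewrite (pF_eq c gam N gam2 N2 k k2 I I2) by auto.
    destruct i as [|[|[|i]]]; [| | |lia];
    unfold xi0, pFv, ip6, Tv; cbv zeta; cbn [fst snd]; lorsimp; frame_rw Fr1; frame_rw Fr2; first [nra | (ring_simplify; rewrite ?ch2p; ring)].
Qed.

Definition Ff (a t kk : R) := (kk * cosh (a * t) - sinh (a * t)) / Af a t kk.

Lemma mean_xi0 c gam N gam2 N2 k k2 I I2 y :
  0 < c < 1 ->
  frenet_curve I gam N k -> frenet_curve I2 gam2 N2 k2 ->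
  I (x2 y) -> I2 (x3 y) ->
  Af (sqrt c) (x1 y) (k (x2 y)) <> 0 -> Af (sqrt (1 - c)) (x1 y) (k2 (x3 y)) <> 0 ->
  mean_curv (Mc c gam N gam2 N2) (xi0 c gam N gam2 N2 y) y =
  sqrt (1 - c) * Ff (sqrt c) (x1 y) (k (x2 y)) - sqrt c * Ff (sqrt (1 - c)) (x1 y) (k2 (x3 y)).
Proof.
  intros Hc HF1 HF2 Hr Hs HA HB.
  rewrite (mean_formula c gam N gam2 N2 k k2 I I2) by (auto; eapply xi0_unit; eauto).
  pose proof (frenet_frame _ _ _ _ _ HF1 Hr) as Fr1.
  pose proof (frenet_frame _ _ _ _ _ HF2 Hs) as Fr2.
  unfold xi0, Tv, Ff; cbn [fst snd]. lorsimp. frame_rw Fr1. frame_rw Fr2.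
  field. auto.
Qed.

Lemma D_Ff a t kk : Af a t kk <> 0 ->
  is_derive (fun u => Ff a u kk) t (a * (Ff a t kk ^ 2 - 1)).
Proof.
  intros HA. unfold Ff.
  assert (Dn : is_derive (fun u => kk * cosh (a * u) - sinh (a * u)) t
                 (kk * (a * sinh (a * t)) - a * cosh (a * t))).
  { apply D_minus; [apply D_scal, D_cosh | apply D_sinh]. }
  pose proof (is_derive_div _ _ t _ _ Dn (D_Af_t a t kk) HA) as D.
  eapply D_ext; [intros; reflexivity|].
  replace (a * (((kk * cosh (a * t) - sinh (a * t)) / Af a t kk) ^ 2 - 1)) with
    (((kk * (a * sinh (a * t)) - a * cosh (a * t)) * Af a t kk -
       (kk * cosh (a * t) - sinh (a * t)) * Atf a t kk) / (Af a t kk ^ 2)).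
  - exact D.
  - unfold Atf. unfold Af in *. pose proof (ch2 (a * t)). field_simplify; auto.
Qed.

Lemma mobius a t k1 k2 : Af a t k1 <> 0 -> Af a t k2 <> 0 -> Ff a t k1 = Ff a t k2 -> k1 = k2.
Proof.
  intros H1 H2 E. unfold Ff in E. pose proof (ch2 (a * t)) as C.
  apply (f_equal (fun z => z * Af a t k1 * Af a t k2)) in E.
  replace ((k1 * cosh (a * t) - sinh (a * t)) / Af a t k1 * Af a t k1 * Af a t k2) with
    ((k1 * cosh (a * t) - sinh (a * t)) * Af a t k2) in E by (field; auto).
  replace ((k2 * cosh (a * t) - sinh (a * t)) / Af a t k2 * Af a t k1 * Af a t k2) with
    ((k2 * cosh (a * t) - sinh (a * t)) * Af a t k1) in E by (field; auto).
  unfold Af in E.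
  assert (H : (k1 - k2) * (cosh (a * t) * cosh (a * t) - sinh (a * t) * sinh (a * t)) = 0).
  { transitivity ((k1 * cosh (a * t) - sinh (a * t)) * (cosh (a * t) - k2 * sinh (a * t)) -
       (k2 * cosh (a * t) - sinh (a * t)) * (cosh (a * t) - k1 * sinh (a * t))); [ring|].
    rewrite E. ring. }
  rewrite C in H. lra.
Qed.

Lemma upd0_x1 y u : x1 (upd y 0 u) = u. Proof. destruct y as [[? ?] ?]; reflexivity. Qed.
Lemma upd0_x2 y u : x2 (upd y 0 u) = x2 y. Proof. destruct y as [[? ?] ?]; reflexivity. Qed.
Lemma upd0_x3 y u : x3 (upd y 0 u) = x3 y. Proof. destruct y as [[? ?] ?]; reflexivity. Qed.

Lemma minimal_fwd c gam N gam2 N2 k k2 I I2 U :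
  0 < c < 1 ->
  frenet_curve I gam N k -> frenet_curve I2 gam2 N2 k2 ->
  open U -> connected3 U -> (exists x, U x) ->
  (forall x, U x -> I (coord x 1) /\ I2 (coord x 2)) ->
  (forall x, U x -> 0 < detg (Mc c gam N gam2 N2) x) ->
  minimal_on (Mc c gam N gam2 N2) U ->
  c = 1 / 2 /\ exists k0, forall x, U x -> k (coord x 1) = k0 /\ k2 (coord x 2) = k0.
Proof.
  intros Hc HF1 HF2 HU HC [x0 Hx0] Hgood Hdet Hmin.
  assert (HAB : forall y, U y -> Af (sqrt c) (x1 y) (k (x2 y)) <> 0 /\ Af (sqrt (1 - c)) (x1 y) (k2 (x3 y)) <> 0).
  { intros y Hy. destruct (Hgood y Hy). eapply AB_nz; eauto. }
  assert (Ha : 0 < sqrt c) by (apply sqrt_pos'; lra).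
  assert (Hb : 0 < sqrt (1 - c)) by (apply sqrt_pos'; lra).
  assert (H1 : forall y, U y -> sqrt (1 - c) * Ff (sqrt c) (x1 y) (k (x2 y)) - sqrt c * Ff (sqrt (1 - c)) (x1 y) (k2 (x3 y)) = 0).
  { intros y Hy. destruct (Hgood y Hy) as [Hr Hs]. destruct (HAB y Hy) as [HA HB].
    rewrite <- (mean_xi0 c gam N gam2 N2 k k2 I I2) by auto.
    apply Hmin; [exact Hy|]. eapply xi0_unit; eauto. }
  assert (H2 : forall y, U y -> Ff (sqrt c) (x1 y) (k (x2 y)) ^ 2 = Ff (sqrt (1 - c)) (x1 y) (k2 (x3 y)) ^ 2).
  { intros y Hy. destruct (HAB y Hy) as [HA HB].
    set (phi := fun u => sqrt (1 - c) * Ff (sqrt c) u (k (x2 y)) - sqrt c * Ff (sqrt (1 - c)) u (k2 (x3 y))).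
    assert (D0 : Derive phi (x1 y) = 0).
    { apply Derive_loc0. destruct (open_line U y 0 HU Hy) as [eps He]. exists eps. intros u Hu.
      pose proof (H1 _ (He u Hu)) as E. rewrite upd0_x1, upd0_x2, upd0_x3 in E. exact E. }
    assert (D : is_derive phi (x1 y) (sqrt (1 - c) * (sqrt c * (Ff (sqrt c) (x1 y) (k (x2 y)) ^ 2 - 1)) -
                   sqrt c * (sqrt (1 - c) * (Ff (sqrt (1 - c)) (x1 y) (k2 (x3 y)) ^ 2 - 1)))).
    { apply D_minus; apply D_scal; apply D_Ff; auto. }
    rewrite (D_unique _ _ _ D) in D0.
    assert (P : 0 < sqrt c * sqrt (1 - c)) by (apply Rmult_lt_0_compat; auto).
    apply Rmult_eq_reg_l with (sqrt c * sqrt (1 - c)); [|lra]. lra. }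
  assert (Hab : sqrt c = sqrt (1 - c)).
  { destruct (Req_dec (sqrt c) (sqrt (1 - c))) as [E|NE]; [exact E|exfalso].
    assert (HF0 : forall y, U y -> Ff (sqrt c) (x1 y) (k (x2 y)) = 0).
    { intros y Hy. pose proof (H1 y Hy) as E1. pose proof (H2 y Hy) as E2.
      set (F := Ff (sqrt c) (x1 y) (k (x2 y))) in *.
      set (G := Ff (sqrt (1 - c)) (x1 y) (k2 (x3 y))) in *.
      assert (E3 : (sqrt (1 - c) * sqrt (1 - c) - sqrt c * sqrt c) * F ^ 2 = 0).
      { replace ((sqrt (1 - c) * sqrt (1 - c) - sqrt c * sqrt c) * F ^ 2) with
          ((sqrt (1 - c) * F - sqrt c * G) * (sqrt (1 - c) * F + sqrt c * G) + sqrt c * sqrt c * (G ^ 2 - F ^ 2)) by ring.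
        rewrite E1, E2. ring. }
      assert (NZ : sqrt (1 - c) * sqrt (1 - c) - sqrt c * sqrt c <> 0).
      { intros Z. apply NE. nra. }
      apply Rmult_integral in E3. destruct E3 as [E3|E3]; [contradiction|].
      simpl in E3. rewrite Rmult_1_r in E3. apply Rmult_integral in E3. destruct E3; assumption. }
    destruct (HAB x0 Hx0) as [HA HB].
    pose proof (D_Ff (sqrt c) (x1 x0) (k (x2 x0)) HA) as D.
    assert (D0 : Derive (fun u => Ff (sqrt c) u (k (x2 x0))) (x1 x0) = 0).
    { apply Derive_loc0. destruct (open_line U x0 0 HU Hx0) as [eps He]. exists eps. intros u Hu.
      pose proof (HF0 _ (He u Hu)) as E. rewrite upd0_x1, upd0_x2 in E. exact E. }
    rewrite (D_unique (fun u => Ff (sqrt c) u (k (x2 x0))) _ _ D) in D0. rewrite (HF0 x0 Hx0) in D0. lra. }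
  assert (Hc2 : c = 1 / 2).
  { pose proof (sqrt_sq c ltac:(lra)). pose proof (sqrt_sq (1 - c) ltac:(lra)).
    rewrite <- Hab in *. lra. }
  split; [exact Hc2|].
  assert (Hk : forall y, U y -> k (x2 y) = k2 (x3 y)).
  { intros y Hy. destruct (HAB y Hy) as [HA HB]. rewrite <- Hab in HB.
    apply (mobius (sqrt c) (x1 y)); auto. pose proof (H1 y Hy) as E. rewrite <- Hab in E.
    apply Rmult_eq_reg_l with (sqrt c); lra. }
  exists (k (x2 x0)). intros x Hx.
  assert (KC : k (x2 x) = k (x2 x0)).
  { apply (k_const U k HU HC); auto. intros y z Hy Hz E1 E3. rewrite (Hk y Hy), (Hk z Hz), E3. reflexivity. }
  split; [exact KC|]. change (k2 (x3 x) = k (x2 x0)). rewrite <- (Hk x Hx). exact KC.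
Qed.

Lemma pd_zero_good (I I2 : R -> Prop) (f : V3 -> R) kk x :
  open I -> open I2 -> I (x2 x) -> I2 (x3 x) ->
  (forall y, I (x2 y) -> I2 (x3 y) -> f y = 0) -> pd kk f x = 0.
Proof.
  intros HI HI2 Hr Hs H. unfold pd. apply Derive_loc0.
  destruct (line_good I I2 x kk HI HI2 Hr Hs) as [eps He]. exists eps. intros u Hu.
  destruct (He u Hu). apply H; auto.
Qed.

Lemma pd2_zero c gam N gam2 N2 k k2 I I2 kk l i m x :
  0 < c < 1 ->
  frenet_curve I gam N k -> frenet_curve I2 gam2 N2 k2 ->
  I (x2 x) -> I2 (x3 x) ->
  (forall y, DGv c k k2 l i m y = 0) ->
  pd kk (pd l (gm (Mc c gam N gam2 N2) i m)) x = 0.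
Proof.
  intros Hc HF1 HF2 Hr Hs H.
  apply (pd_zero_good I I2); [exact (frenet_open _ _ _ _ HF1) | exact (frenet_open _ _ _ _ HF2) | exact Hr | exact Hs |].
  intros y Hy1 Hy2. rewrite (pd_gm_eq c gam N gam2 N2 k k2 I I2) by auto. apply H.
Qed.

Lemma D_Atf_t a t kk : is_derive (fun u => Atf a u kk) t (a * a * Af a t kk).
Proof.
  unfold Atf, Af.
  replace (a * a * (cosh (a * t) - kk * sinh (a * t))) with (a * (a * cosh (a * t) - kk * (a * sinh (a * t)))) by ring.
  apply D_scal. apply D_minus; [apply D_sinh | apply D_scal, D_cosh].
Qed.

Lemma pd00_11 c gam N gam2 N2 k k2 I I2 x :
  0 < c < 1 ->
  frenet_curve I gam N k -> frenet_curve I2 gam2 N2 k2 ->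
  I (x2 x) -> I2 (x3 x) ->
  pd 0 (pd 0 (gm (Mc c gam N gam2 N2) 1 1)) x =
  2 * (Atf (sqrt c) (x1 x) (k (x2 x)) ^ 2 + c * Af (sqrt c) (x1 x) (k (x2 x)) ^ 2).
Proof.
  intros Hc HF1 HF2 Hr Hs. unfold pd at 1. 
  rewrite (Derive_ext (fun u => pd 0 (gm (Mc c gam N gam2 N2) 1 1) (upd x 0 u))
             (fun u => 2 * Af (sqrt c) u (k (x2 x)) * Atf (sqrt c) u (k (x2 x)))).
  - destruct x as [[t r] s]. cbn [coord x1 x2 x3 fst snd].
    apply D_unique.
    apply (D_ext (fun u => 2 * (Af (sqrt c) u (k r) * Atf (sqrt c) u (k r)))); [intros; ring|].
    replace (2 * (Atf (sqrt c) t (k r) ^ 2 + c * Af (sqrt c) t (k r) ^ 2)) with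
      (2 * (Atf (sqrt c) t (k r) * Atf (sqrt c) t (k r) + Af (sqrt c) t (k r) * (sqrt c * sqrt c * Af (sqrt c) t (k r))))
      by (rewrite sqrt_sq by lra; ring).
    apply D_scal. apply (D_mult (fun u => Af (sqrt c) u (k r)) (fun u => Atf (sqrt c) u (k r))).
    + apply D_Af_t.
    + apply D_Atf_t.
  - intros u. rewrite (pd_gm_eq c gam N gam2 N2 k k2 I I2).
    + destruct x as [[t r] s]. reflexivity.
    + exact Hc.
    + exact HF1.
    + exact HF2.
    + destruct x as [[t r] s]; exact Hr.
    + destruct x as [[t r] s]; exact Hs.
Qed.

Lemma pd00_22 c gam N gam2 N2 k k2 I I2 x :
  0 < c < 1 ->
  frenet_curve I gam N k -> frenet_curve I2 gam2 N2 k2 ->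
  I (x2 x) -> I2 (x3 x) ->
  pd 0 (pd 0 (gm (Mc c gam N gam2 N2) 2 2)) x =
  2 * (Atf (sqrt (1 - c)) (x1 x) (k2 (x3 x)) ^ 2 + (1 - c) * Af (sqrt (1 - c)) (x1 x) (k2 (x3 x)) ^ 2).
Proof.
  intros Hc HF1 HF2 Hr Hs. unfold pd at 1. 
  rewrite (Derive_ext (fun u => pd 0 (gm (Mc c gam N gam2 N2) 2 2) (upd x 0 u))
             (fun u => 2 * Af (sqrt (1 - c)) u (k2 (x3 x)) * Atf (sqrt (1 - c)) u (k2 (x3 x)))).
  - destruct x as [[t r] s]. cbn [coord x1 x2 x3 fst snd].
    apply D_unique.
    apply (D_ext (fun u => 2 * (Af (sqrt (1 - c)) u (k2 s) * Atf (sqrt (1 - c)) u (k2 s)))); [intros; ring|].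
    replace (2 * (Atf (sqrt (1 - c)) t (k2 s) ^ 2 + (1 - c) * Af (sqrt (1 - c)) t (k2 s) ^ 2)) with
      (2 * (Atf (sqrt (1 - c)) t (k2 s) * Atf (sqrt (1 - c)) t (k2 s) + Af (sqrt (1 - c)) t (k2 s) * (sqrt (1 - c) * sqrt (1 - c) * Af (sqrt (1 - c)) t (k2 s))))
      by (rewrite sqrt_sq by lra; ring).
    apply D_scal. apply (D_mult (fun u => Af (sqrt (1 - c)) u (k2 s)) (fun u => Atf (sqrt (1 - c)) u (k2 s))).
    + apply D_Af_t.
    + apply D_Atf_t.
  - intros u. rewrite (pd_gm_eq c gam N gam2 N2 k k2 I I2).
    + destruct x as [[t r] s]. reflexivity.
    + exact Hc.
    + exact HF1.
    + exact HF2.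
    + destruct x as [[t r] s]; exact Hr.
    + destruct x as [[t r] s]; exact Hs.
Qed.

Ltac riem_compute c gam N gam2 N2 k k2 I I2 x Hc HF1 HF2 Hr Hs :=
  unfold Riem;
  rewrite ?(pd00_11 c gam N gam2 N2 k k2 I I2 x Hc HF1 HF2 Hr Hs),
          ?(pd00_22 c gam N gam2 N2 k k2 I I2 x Hc HF1 HF2 Hr Hs);
  repeat (rewrite (pd2_zero c gam N gam2 N2 k k2 I I2 _ _ _ _ x Hc HF1 HF2 Hr Hs) by (intros; reflexivity));
  unfold Gam1, ginv, sum3;
  rewrite !(pd_gm_eq c gam N gam2 N2 k k2 I I2 _ _ _ x Hc HF1 HF2 Hr Hs);
  rewrite (detg_eq c gam N gam2 N2 k k2 I I2 x Hc HF1 HF2 Hr Hs);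
  unfold cof; cbn [Nat.add Nat.modulo Nat.divmod fst snd];
  rewrite !(gm_eq c gam N gam2 N2 k k2 I I2 _ _ x Hc HF1 HF2 Hr Hs);
  unfold DGv, Gv, n2; cbv zeta; simpl.

Lemma R0101 c gam N gam2 N2 k k2 I I2 x :
  0 < c < 1 ->
  frenet_curve I gam N k -> frenet_curve I2 gam2 N2 k2 ->
  I (x2 x) -> I2 (x3 x) ->
  Af (sqrt c) (x1 x) (k (x2 x)) <> 0 -> Af (sqrt (1 - c)) (x1 x) (k2 (x3 x)) <> 0 ->
  Riem (Mc c gam N gam2 N2) 0 1 0 1 x = - c * Af (sqrt c) (x1 x) (k (x2 x)) ^ 2.
Proof.
  intros Hc HF1 HF2 Hr Hs HA HB.
  riem_compute c gam N gam2 N2 k k2 I I2 x Hc HF1 HF2 Hr Hs.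
  field. auto.
Qed.

Lemma R0202 c gam N gam2 N2 k k2 I I2 x :
  0 < c < 1 ->
  frenet_curve I gam N k -> frenet_curve I2 gam2 N2 k2 ->
  I (x2 x) -> I2 (x3 x) ->
  Af (sqrt c) (x1 x) (k (x2 x)) <> 0 -> Af (sqrt (1 - c)) (x1 x) (k2 (x3 x)) <> 0 ->
  Riem (Mc c gam N gam2 N2) 0 2 0 2 x = - (1 - c) * Af (sqrt (1 - c)) (x1 x) (k2 (x3 x)) ^ 2.
Proof.
  intros Hc HF1 HF2 Hr Hs HA HB.
  riem_compute c gam N gam2 N2 k k2 I I2 x Hc HF1 HF2 Hr Hs.
  field. auto.
Qed.

Lemma R1212 c gam N gam2 N2 k k2 I I2 x :
  0 < c < 1 ->
  frenet_curve I gam N k -> frenet_curve I2 gam2 N2 k2 ->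
  I (x2 x) -> I2 (x3 x) ->
  Af (sqrt c) (x1 x) (k (x2 x)) <> 0 -> Af (sqrt (1 - c)) (x1 x) (k2 (x3 x)) <> 0 ->
  Riem (Mc c gam N gam2 N2) 1 2 1 2 x =
  - (Af (sqrt c) (x1 x) (k (x2 x)) * Atf (sqrt c) (x1 x) (k (x2 x)) *
     Af (sqrt (1 - c)) (x1 x) (k2 (x3 x)) * Atf (sqrt (1 - c)) (x1 x) (k2 (x3 x))).
Proof.
  intros Hc HF1 HF2 Hr Hs HA HB.
  riem_compute c gam N gam2 N2 k k2 I I2 x Hc HF1 HF2 Hr Hs.
  field. auto.
Qed.

Definition ev (i : nat) : nat -> R := fun n => if Nat.eqb n i then 1 else 0.

Lemma sec_ev (F : V3 -> V6) x i j : 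
  sec F x (ev i) (ev j) =
  sum3 (fun a => sum3 (fun b => sum3 (fun c => sum3 (fun d =>
    Riem F a b c d x * ev i a * ev j b * ev i c * ev j d)))) /
  (gX F x (ev i) (ev i) * gX F x (ev j) (ev j) - gX F x (ev i) (ev j) ^ 2).
Proof. reflexivity. Qed.

Lemma sec01 F x : sec F x (ev 0) (ev 1) =
  Riem F 0 1 0 1 x / (gm F 0 0 x * gm F 1 1 x - gm F 0 1 x ^ 2).
Proof. unfold sec, gX, sum3, ev; cbn [Nat.eqb]. f_equal; ring. Qed.
Lemma sec02 F x : sec F x (ev 0) (ev 2) =
  Riem F 0 2 0 2 x / (gm F 0 0 x * gm F 2 2 x - gm F 0 2 x ^ 2).
Proof. unfold sec, gX, sum3, ev; cbn [Nat.eqb]. f_equal; ring. Qed.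
Lemma sec12 F x : sec F x (ev 1) (ev 2) =
  Riem F 1 2 1 2 x / (gm F 1 1 x * gm F 2 2 x - gm F 1 2 x ^ 2).
Proof. unfold sec, gX, sum3, ev; cbn [Nat.eqb]. f_equal; ring. Qed.

Lemma const_fwd c gam N gam2 N2 k k2 I I2 U :
  0 < c < 1 ->
  frenet_curve I gam N k -> frenet_curve I2 gam2 N2 k2 ->
  open U -> connected3 U -> (exists x, U x) ->
  (forall x, U x -> I (coord x 1) /\ I2 (coord x 2)) ->
  (forall x, U x -> 0 < detg (Mc c gam N gam2 N2) x) ->
  const_sec (Mc c gam N gam2 N2) U ->
  c = 1 / 2 /\ exists a b, a * b = 1 /\ forall x, U x ->
        k (coord x 1) = a /\ k2 (coord x 2) = b.
Proof.
  intros Hc HF1 HF2 HU HC [x0 Hx0] Hgood Hdet [K0 HK].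
  assert (HAB : forall y, U y -> Af (sqrt c) (x1 y) (k (x2 y)) <> 0 /\ Af (sqrt (1 - c)) (x1 y) (k2 (x3 y)) <> 0).
  { intros y Hy. destruct (Hgood y Hy). eapply AB_nz; eauto. }
  assert (Hgm : forall y i m, U y -> gm (Mc c gam N gam2 N2) i m y = Gv c k k2 i m y).
  { intros y i m Hy. destruct (Hgood y Hy). eapply gm_eq; eauto. }
  assert (K01 : forall y, U y -> K0 = - c).
  { intros y Hy. destruct (HAB y Hy) as [HA HB]. destruct (Hgood y Hy) as [Hr Hs].
    assert (D : gm (Mc c gam N gam2 N2) 0 0 y * gm (Mc c gam N gam2 N2) 1 1 y - gm (Mc c gam N gam2 N2) 0 1 y ^ 2 =
                Af (sqrt c) (x1 y) (k (x2 y)) ^ 2).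
    { rewrite !Hgm by exact Hy. unfold Gv, n2. ring. }
    rewrite <- (HK y Hy (ev 0) (ev 1)).
    - rewrite sec01, D, (R0101 c gam N gam2 N2 k k2 I I2) by auto. field. auto.
    - unfold gX, sum3, ev; cbn [Nat.eqb]. rewrite !Hgm by exact Hy. unfold Gv, n2. simpl.
      intros Z. apply HA. nra. }
  assert (K02 : forall y, U y -> K0 = - (1 - c)).
  { intros y Hy. destruct (HAB y Hy) as [HA HB]. destruct (Hgood y Hy) as [Hr Hs].
    assert (D : gm (Mc c gam N gam2 N2) 0 0 y * gm (Mc c gam N gam2 N2) 2 2 y - gm (Mc c gam N gam2 N2) 0 2 y ^ 2 =
                Af (sqrt (1 - c)) (x1 y) (k2 (x3 y)) ^ 2).
    { rewrite !Hgm by exact Hy. unfold Gv, n2. ring. }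
    rewrite <- (HK y Hy (ev 0) (ev 2)).
    - rewrite sec02, D, (R0202 c gam N gam2 N2 k k2 I I2) by auto. field. auto.
    - unfold gX, sum3, ev; cbn [Nat.eqb]. rewrite !Hgm by exact Hy. unfold Gv, n2. simpl.
      intros Z. apply HB. nra. }
  assert (Hc2 : c = 1 / 2).
  { pose proof (K01 x0 Hx0). pose proof (K02 x0 Hx0). lra. }
  split; [exact Hc2|].
  assert (Hab : sqrt (1 - c) = sqrt c) by (apply sqrt_half_eq; exact Hc2).
  assert (Hkk : forall y, U y -> k (x2 y) * k2 (x3 y) = 1).
  { intros y Hy. destruct (HAB y Hy) as [HA HB]. destruct (Hgood y Hy) as [Hr Hs].
    assert (D : gm (Mc c gam N gam2 N2) 1 1 y * gm (Mc c gam N gam2 N2) 2 2 y - gm (Mc c gam N gam2 N2) 1 2 y ^ 2 =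
                Af (sqrt c) (x1 y) (k (x2 y)) ^ 2 * Af (sqrt (1 - c)) (x1 y) (k2 (x3 y)) ^ 2).
    { rewrite !Hgm by exact Hy. unfold Gv, n2. ring. }
    assert (Hnz : Af (sqrt c) (x1 y) (k (x2 y)) ^ 2 * Af (sqrt (1 - c)) (x1 y) (k2 (x3 y)) ^ 2 <> 0).
    { apply Rmult_integral_contrapositive; split; apply pow_nonzero; auto. }
    assert (ND : gX (Mc c gam N gam2 N2) y (ev 1) (ev 1) * gX (Mc c gam N gam2 N2) y (ev 2) (ev 2) -
                 gX (Mc c gam N gam2 N2) y (ev 1) (ev 2) ^ 2 <> 0).
    { unfold gX, sum3, ev; cbn [Nat.eqb]. rewrite !Hgm by exact Hy. unfold Gv, n2. simpl.
      intros Z. apply Hnz. rewrite <- Z. ring. }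
    pose proof (HK y Hy (ev 1) (ev 2) ND) as E.
    rewrite sec12, D, (R1212 c gam N gam2 N2 k k2 I I2) in E by auto.
    rewrite (K01 y Hy) in E.
    rewrite Hab in *.
    set (a := sqrt c) in *. set (C := cosh (a * x1 y)) in *. set (S := sinh (a * x1 y)) in *.
    set (k1 := k (x2 y)) in *. set (k3 := k2 (x3 y)) in *.
    assert (Hsq : a * a = 1 / 2) by (unfold a; rewrite sqrt_sq; lra).
    assert (CS : C * C - S * S = 1) by apply ch2.
    assert (E2 : Atf a (x1 y) k1 * Atf a (x1 y) k3 = Af a (x1 y) k1 * Af a (x1 y) k3 / 2).
    { replace (Atf a (x1 y) k1 * Atf a (x1 y) k3) with
        (- (- (Af a (x1 y) k1 * Atf a (x1 y) k1 * Af a (x1 y) k3 * Atf a (x1 y) k3) /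
            (Af a (x1 y) k1 ^ 2 * Af a (x1 y) k3 ^ 2)) * (Af a (x1 y) k1 * Af a (x1 y) k3))
        by (field; auto).
      rewrite E, Hc2. field. }
    unfold Atf, Af in E2. fold C S in E2.
    assert (E3 : (k1 * k3 - 1) * (C * C - S * S) = 0).
    { transitivity (2 * (a * (S - k1 * C) * (a * (S - k3 * C))) - (C - k1 * S) * (C - k3 * S)).
      - replace (2 * (a * (S - k1 * C) * (a * (S - k3 * C)))) with (2 * (a * a) * ((S - k1 * C) * (S - k3 * C))) by ring.
        rewrite Hsq. field.
      - rewrite E2. field. }
    rewrite CS in E3. lra. }
  exists (k (x2 x0)), (k2 (x3 x0)). split; [apply Hkk; exact Hx0|].
  intros x Hx.
  assert (KC : k (x2 x) = k (x2 x0)).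
  { apply (k_const U k HU HC); auto. intros y z Hy Hz E1 E3.
    pose proof (Hkk y Hy) as P1. pose proof (Hkk z Hz) as P2. rewrite E3 in P2.
    assert (k2 (x3 y) <> 0) by (intros Z; rewrite Z in P1; lra).
    apply Rmult_eq_reg_r with (k2 (x3 y)); auto. lra. }
  split; [exact KC|].
  change (k2 (x3 x) = k2 (x3 x0)).
  pose proof (Hkk x Hx) as P1. pose proof (Hkk x0 Hx0) as P2. rewrite KC in P1.
  assert (k (x2 x0) <> 0) by (intros Z; rewrite Z in P1; lra).
  apply Rmult_eq_reg_l with (k (x2 x0)); auto. lra.
Qed.

Lemma upd_x1 y l u : x1 (upd y l u) = match l with O => u | _ => x1 y end.
Proof. destruct y as [[? ?] ?]; destruct l as [|[|l]]; reflexivity. Qed.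

Lemma tonly (U : V3 -> Prop) (f : V3 -> R) (h : R -> R) l y :
  open U -> (forall z, U z -> f z = h (x1 z)) -> U y ->
  pd l f y = match l with O => Derive h (x1 y) | _ => 0 end.
Proof.
  intros HU Hf Hy. unfold pd.
  destruct (open_line U y l HU Hy) as [eps He].
  assert (L : locally (coord y l) (fun u => f (upd y l u) = h (x1 (upd y l u)))).
  { exists eps. intros u Hu. apply Hf. apply He. exact Hu. }
  transitivity (Derive (fun u => h (x1 (upd y l u))) (coord y l)).
  { apply Derive_ext_loc. exact L. }
  destruct l as [|l].
  - destruct y as [[? ?] ?]. reflexivity.
  - rewrite (Derive_ext (fun u => h (x1 (upd y (S l) u))) (fun _ => h (x1 y))).
    + apply Derive_const.
    + intros u. rewrite upd_x1. reflexivity.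
Qed.

Lemma tonly2 (U : V3 -> Prop) (f : V3 -> R) (h : R -> R) kk l y :
  open U -> (forall z, U z -> f z = h (x1 z)) -> U y ->
  pd kk (pd l f) y = match kk, l with O, O => Derive (Derive h) (x1 y) | _, _ => 0 end.
Proof.
  intros HU Hf Hy.
  rewrite (tonly U (pd l f) (match l with O => Derive h | _ => fun _ => 0 end) kk y HU).
  - destruct kk, l; try reflexivity. apply Derive_const.
  - intros z Hz. rewrite (tonly U f h l z HU Hf Hz). destruct l; reflexivity.
  - exact Hy.
Qed.

Definition Gt (a a0 b0 : R) (i m : nat) (t : R) : R :=
  match n2 i, n2 m with
  | O, O => 1
  | 1%nat, 1%nat => Af a t a0 ^ 2
  | 2%nat, 2%nat => Af a t b0 ^ 2
  | _, _ => 0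
  end.

Definition DT1 (a a0 b0 : R) (i m : nat) (t : R) : R :=
  match n2 i, n2 m with
  | 1%nat, 1%nat => 2 * Af a t a0 * Atf a t a0
  | 2%nat, 2%nat => 2 * Af a t b0 * Atf a t b0
  | _, _ => 0
  end.

Definition DT2 (a a0 b0 : R) (i m : nat) (t : R) : R :=
  match n2 i, n2 m with
  | 1%nat, 1%nat => 2 * (Atf a t a0 * Atf a t a0 + Af a t a0 * (a * a * Af a t a0))
  | 2%nat, 2%nat => 2 * (Atf a t b0 * Atf a t b0 + Af a t b0 * (a * a * Af a t b0))
  | _, _ => 0
  end.

Lemma D_sqAf a t kk : is_derive (fun u => Af a u kk ^ 2) t (2 * Af a t kk * Atf a t kk).
Proof. apply (D_sq (fun u => Af a u kk)). apply D_Af_t. Qed.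

Lemma D_AfAtf a t kk : is_derive (fun u => 2 * Af a u kk * Atf a u kk) t
   (2 * (Atf a t kk * Atf a t kk + Af a t kk * (a * a * Af a t kk))).
Proof.
  apply (D_ext (fun u => 2 * (Af a u kk * Atf a u kk))); [intros; ring|].
  apply D_scal. apply (D_mult (fun u => Af a u kk) (fun u => Atf a u kk)); [apply D_Af_t|apply D_Atf_t].
Qed.

Lemma DGt a a0 b0 i m t : Derive (Gt a a0 b0 i m) t = DT1 a a0 b0 i m t.
Proof.
  unfold Gt, DT1. destruct (n2 i) as [|[|[|]]]; destruct (n2 m) as [|[|[|]]];
  try apply Derive_const; apply D_unique; apply D_sqAf.
Qed.

Lemma DDGt a a0 b0 i m t : Derive (Derive (Gt a a0 b0 i m)) t = DT2 a a0 b0 i m t.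
Proof.
  rewrite (Derive_ext _ (DT1 a a0 b0 i m)) by (intros; apply DGt).
  unfold DT1, DT2. destruct (n2 i) as [|[|[|]]]; destruct (n2 m) as [|[|[|]]];
  try apply Derive_const; apply D_unique; apply D_AfAtf.
Qed.

Definition Kp (a a0 b0 t : R) (i k : nat) : R :=
  let A := Af a t a0 in let At := Atf a t a0 in
  let B := Af a t b0 in let Bt := Atf a t b0 in
  match n2 i, n2 k with
  | O, 1%nat | 1%nat, O => - (a * a) * A ^ 2
  | O, 2%nat | 2%nat, O => - (a * a) * B ^ 2
  | 1%nat, 2%nat | 2%nat, 1%nat => - (A * At * B * Bt)
  | _, _ => 0
  end.

Definition dl (i j : nat) : R := if Nat.eqb (n2 i) (n2 j) then 1 else 0.

Lemma RiemT_eq (F : V3 -> V6) x a a0 b0 t :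
  (forall i m, gm F i m x = Gt a a0 b0 i m t) ->
  (forall l i m, pd l (gm F i m) x = match l with O => DT1 a a0 b0 i m t | _ => 0 end) ->
  (forall kk l i m, pd kk (pd l (gm F i m)) x =
      match kk, l with O, O => DT2 a a0 b0 i m t | _, _ => 0 end) ->
  Af a t a0 <> 0 -> Af a t b0 <> 0 ->
  forall i k l m, Riem F i k l m x = Kp a a0 b0 t i k * (dl i l * dl k m - dl i m * dl k l).
Proof.
  intros HG H1 H2 HA HB i k l m.
  unfold Riem, Gam1, ginv, detg, cof, sum3. rewrite !H2, !H1. cbn [Nat.add Nat.modulo Nat.divmod fst snd].
  rewrite !HG.
  destruct i as [|[|i]]; destruct k as [|[|k]]; destruct l as [|[|l]]; destruct m as [|[|m]];
  unfold Kp, dl, Gt, DT1, DT2, n2; cbv zeta; simpl; field; auto.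
Qed.

Lemma sec_const (F : V3 -> V6) x a a0 b0 t X Y :
  (forall i m, gm F i m x = Gt a a0 b0 i m t) ->
  (forall i k l m, Riem F i k l m x = Kp a a0 b0 t i k * (dl i l * dl k m - dl i m * dl k l)) ->
  a * a = 1 / 2 ->
  Atf a t a0 * Atf a t b0 = Af a t a0 * Af a t b0 / 2 ->
  gX F x X X * gX F x Y Y - gX F x X Y ^ 2 <> 0 ->
  sec F x X Y = - 1 / 2.
Proof.
  intros HG HR Ha Hrel HD. unfold sec in *. unfold gX, sum3 in *. rewrite !HR. rewrite !HG in *.
  clear HG HR. unfold Kp, dl, Gt, n2 in *; cbv zeta in *; simpl in *.
  set (A := Af a t a0) in *. set (B := Af a t b0) in *.
  set (At := Atf a t a0) in *. set (Bt := Atf a t b0) in *.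
  set (p01 := X 0%nat * Y 1%nat - X 1%nat * Y 0%nat).
  set (p02 := X 0%nat * Y 2%nat - X 2%nat * Y 0%nat).
  set (p12 := X 1%nat * Y 2%nat - X 2%nat * Y 1%nat).
  match goal with |- ?n / ?d = _ =>
    assert (En : n = - (a * a) * A ^ 2 * p01 ^ 2 + - (a * a) * B ^ 2 * p02 ^ 2 - A * At * B * Bt * p12 ^ 2)
      by (unfold p01, p02, p12; ring);
    assert (Ed : d = A ^ 2 * p01 ^ 2 + B ^ 2 * p02 ^ 2 + A ^ 2 * B ^ 2 * p12 ^ 2)
      by (unfold p01, p02, p12; ring) end.
  rewrite En, Ed. try rewrite Ed in HD.
  replace (A * At * B * Bt) with (A * B * (At * Bt)) by ring. rewrite Hrel, Ha.
  field. intros Z; apply HD; rewrite <- Z; ring.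
Qed.

Lemma sec_back c gam N gam2 N2 k k2 I I2 U :
  0 < c < 1 ->
  frenet_curve I gam N k -> frenet_curve I2 gam2 N2 k2 ->
  open U ->
  (forall x, U x -> I (coord x 1) /\ I2 (coord x 2)) ->
  (forall x, U x -> 0 < detg (Mc c gam N gam2 N2) x) ->
  (c = 1 / 2 /\ exists a b, a * b = 1 /\ forall x, U x ->
        k (coord x 1) = a /\ k2 (coord x 2) = b) ->
  has_sec_curv (Mc c gam N gam2 N2) U (- 1 / 2).
Proof.
  intros Hc HF1 HF2 HU Hgood Hdet [Hc2 [a0 [b0 [Hab0 Hk]]]].
  intros x Hx X Y HD.
  assert (Hab : sqrt (1 - c) = sqrt c) by (apply sqrt_half_eq; exact Hc2).
  assert (Hk' : forall z, U z -> k (x2 z) = a0 /\ k2 (x3 z) = b0) by exact Hk.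
  assert (HGz : forall i m z, U z -> gm (Mc c gam N gam2 N2) i m z = Gt (sqrt c) a0 b0 i m (x1 z)).
  { intros i m z Hz. destruct (Hgood z Hz) as [Hr Hs]. destruct (Hk' z Hz) as [E1 E2].
    rewrite (gm_eq c gam N gam2 N2 k k2 I I2) by auto. unfold Gv, Gt. rewrite E1, E2, Hab. reflexivity. }
  assert (H1 : forall l i m, pd l (gm (Mc c gam N gam2 N2) i m) x =
             match l with O => DT1 (sqrt c) a0 b0 i m (x1 x) | _ => 0 end).
  { intros l i m. rewrite (tonly U _ (Gt (sqrt c) a0 b0 i m) l x HU (HGz i m) Hx).
    destruct l; [apply DGt|reflexivity]. }
  assert (H2 : forall kk l i m, pd kk (pd l (gm (Mc c gam N gam2 N2) i m)) x =
             match kk, l with O, O => DT2 (sqrt c) a0 b0 i m (x1 x) | _, _ => 0 end).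
  { intros kk l i m. rewrite (tonly2 U _ (Gt (sqrt c) a0 b0 i m) kk l x HU (HGz i m) Hx).
    destruct kk, l; try reflexivity. apply DDGt. }
  destruct (Hgood x Hx) as [Hr Hs]. destruct (Hk' x Hx) as [E1 E2].
  destruct (AB_nz c gam N gam2 N2 k k2 I I2 x Hc HF1 HF2 Hr Hs (Hdet x Hx)) as [HA HB].
  rewrite E1 in HA. rewrite E2, Hab in HB.
  assert (Ha : sqrt c * sqrt c = 1 / 2) by (rewrite sqrt_sq; lra).
  apply (sec_const _ x (sqrt c) a0 b0 (x1 x)).
  - intros. apply HGz. exact Hx.
  - apply RiemT_eq; auto.
  - exact Ha.
  - unfold Atf, Af. set (a := sqrt c) in *.
    set (C := cosh (a * x1 x)). set (S := sinh (a * x1 x)).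
    assert (CS : C * C - S * S = 1) by apply ch2.
    transitivity (a * a * ((S - a0 * C) * (S - b0 * C))); [ring|].
    rewrite Ha.
    replace ((S - a0 * C) * (S - b0 * C)) with ((C - a0 * S) * (C - b0 * S) + (a0 * b0 - 1) * (C * C - S * S)) by ring.
    rewrite Hab0. field.
  - exact HD.
Qed.


Theorem lemma3p5 (c : R) (gam N gam2 N2 : R -> V3) (k k2 : R -> R)
  (I I2 : R -> Prop) (U : V3 -> Prop) :
  0 < c < 1 ->
  frenet_curve I gam N k -> frenet_curve I2 gam2 N2 k2 ->
  open U -> connected3 U -> (exists x, U x) ->
  (forall x, U x -> I (coord x 1) /\ I2 (coord x 2)) ->
  (forall x, U x -> 0 < detg (Mc c gam N gam2 N2) x) ->
  ((minimal_on (Mc c gam N gam2 N2) U <->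
      c = 1 / 2 /\ exists k0, forall x, U x ->
        k (coord x 1) = k0 /\ k2 (coord x 2) = k0) /\
   (const_sec (Mc c gam N gam2 N2) U <->
      c = 1 / 2 /\ exists a b, a * b = 1 /\ forall x, U x ->
        k (coord x 1) = a /\ k2 (coord x 2) = b) /\
   ((c = 1 / 2 /\ exists a b, a * b = 1 /\ forall x, U x ->
        k (coord x 1) = a /\ k2 (coord x 2) = b) ->
      has_sec_curv (Mc c gam N gam2 N2) U (- 1 / 2))).
Proof.
  intros Hc HF1 HF2 HU HC Hne Hgood Hdet.
  split; [split|split; [split|]].
  - intros Hmin. exact (minimal_fwd c gam N gam2 N2 k k2 I I2 U Hc HF1 HF2 HU HC Hne Hgood Hdet Hmin).
  - intros [Hc2 [k0 Hk]] x Hx xi Hxi.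
    destruct (Hgood x Hx) as [Hr Hs]. destruct (Hk x Hx) as [E1 E2].
    exact (minimal_back c gam N gam2 N2 k k2 I I2 x xi k0 Hc Hc2 HF1 HF2 Hr Hs (Hdet x Hx) E1 E2 Hxi).
  - intros Hs. exact (const_fwd c gam N gam2 N2 k k2 I I2 U Hc HF1 HF2 HU HC Hne Hgood Hdet Hs).
  - intros H. exists (- 1 / 2). exact (sec_back c gam N gam2 N2 k k2 I I2 U Hc HF1 HF2 HU Hgood Hdet H).
  - intros H. exact (sec_back c gam N gam2 N2 k k2 I I2 U Hc HF1 HF2 HU Hgood Hdet H).
Qed.
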